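(* Let $(A,E,\langle\!\langle-,-\rangle\!\rangle,\partial,[\![-,-]\!])$ be a double Courant--Dorfman algebra and $N\ge1$. For $a\in A$, $e,f\in E$ and $1\le i,j,u,v\le N$ define (summing over Sweedler components) $$\partial_N a_{ij}:=(\partial a)_{ij},\qquad \langle e_{ij},f_{uv}\rangle:=\langle\!\langle e,f\rangle\!\rangle'_{uj}\,\langle\!\langle e,f\rangle\!\rangle''_{iv},$$ $$[e_{ij},f_{uv}]:=([\![e,f]\!]_l')_{uj}([\![e,f]\!]_l'')_{iv}+([\![e,f]\!]_r')_{uj}([\![e,f]\!]_r'')_{iv}.$$ Then $\partial_N$ extends to a derivation $A_N\to E_N$, $\langle-,-\rangle$ extends to an $A_N$-bilinear form on $E_N$, and $[-,-]$ extends to a well-defined $\Bbbk$-bilinear bracket on $E_N$ satisfying $[x,cy]=c[x,y]+\langle x,\partial_Nc\rangle y$, in such a way that $(A_N,E_N,\langle-,-\rangle,\partial_N,[-,-])$ is a Courant--Dorfman algebra.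
   Context: All algebras are associative unital $\Bbbk$-algebras, $\Bbbk$ a field of characteristic zero, $\otimes=\otimes_\Bbbk$. Sweedler notation: $x=x'\otimes x''$ with summation suppressed; $(x'\otimes x'')^\sigma=x''\otimes x'$. Outer structure on $A\otimes A$, $E\otimes A$, $A\otimes E$: $a(x'\otimes x'')b=ax'\otimes x''b$; inner structure on $A\otimes A$: $a*(x'\otimes x'')*b=x'b\otimes ax''$. For $x=x'\otimes x''$ and $y$: $x\otimes_1y:=x'\otimes y\otimes x''$, $y\otimes_1x:=x'\otimes y\otimes x''$. Double Courant--Dorfman algebra: $A$ an algebra, $E$ an $A$-bimodule, $\partial\colon A\to E$ a derivation, acting on $A\otimes A$ by $\partial(x'\otimes x'')=\partial x'\otimes x''+x'\otimes\partial x''$. A pairing $\langle\!\langle-,-\rangle\!\rangle\colon E\otimes E\to A\otimes A$ is linear with $f\mapsto\langle\!\langle e,f\rangle\!\rangle$ a bimodule map to $(A\otimes A)_{\mathrm{out}}$ and $f\mapsto\langle\!\langle f,e\rangle\!\rangle$ a bimodule map to $(A\otimes A)_{\mathrm{inn}}$; symmetric: $\langle\!\langle e,f\rangle\!\rangle=\langle\!\langle f,e\rangle\!\rangle^\sigma$. Extensions: $\langle\!\langle e,f\otimes a\rangle\!\rangle_L=\langle\!\langle e,f\rangle\!\rangle\otimes a$, $\langle\!\langle e,a\otimes f\rangle\!\rangle_L=0$, $\langle\!\langle e,a\otimes f\rangle\!\rangle_R=a\otimes\langle\!\langle e,f\rangle\!\rangle$, $\langle\!\langle e,f\otimes a\rangle\!\rangle_R=0$,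 $\langle\!\langle e\otimes a,f\rangle\!\rangle_L=\langle\!\langle a\otimes e,f\rangle\!\rangle_R=\langle\!\langle e,f\rangle\!\rangle'\otimes a\otimes\langle\!\langle e,f\rangle\!\rangle''$, $\langle\!\langle a\otimes e,f\rangle\!\rangle_L=\langle\!\langle e\otimes a,f\rangle\!\rangle_R=0$. A double Courant--Dorfman bracket is a linear map $[\![-,-]\!]\colon T_AE\otimes T_AE\to T_AE\otimes T_AE$ of degree $-1$ ($T_AE$ the tensor algebra, $E$ in degree 1) with $[\![e,a]\!]=\langle\!\langle e,\partial a\rangle\!\rangle$, $[\![a,e]\!]=-\langle\!\langle\partial a,e\rangle\!\rangle$, $[\![a,b]\!]=0$; for $e,f\in E$, $[\![e,f]\!]=[\![e,f]\!]_l+[\![e,f]\!]_r\in E\otimes A\oplus A\otimes E$. Extensions: $[\![e,f\otimes a]\!]_L=[\![e,f]\!]\otimes a$, $[\![e,a\otimes f]\!]_L=\langle\!\langle e,\partial a\rangle\!\rangle\otimes f$, $[\![e,f\otimes a]\!]_R=f\otimes\langle\!\langle e,\partial a\rangle\!\rangle$, $[\![e,a\otimes f]\!]_R=a\otimes[\![e,f]\!]$, $[\![e\otimes a,f]\!]_L=[\![e,f]\!]\otimes_1a+\langle\!\langle e,f\rangle\!\rangle\otimes_1\partial a$, $[\![a\otimes e,f]\!]_L=-\langle\!\langle\partial a,f\rangle\!\rangle\otimes_1e$. The axioms, for all $a,b\in A$, $e,f,g\in E$: $\partial\langle\!\langle e,f\rangle\!\rangle=[\![e,f]\!]+[\![f,e]\!]^\sigma$;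 $[\![\partial a,e]\!]=0$; $\langle\!\langle\partial a,\partial b\rangle\!\rangle=0$; $[\![e,fa]\!]=[\![e,f]\!]a+f\langle\!\langle e,\partial a\rangle\!\rangle$; $[\![e,af]\!]=a[\![e,f]\!]+\langle\!\langle e,\partial a\rangle\!\rangle f$; $[\![e,[\![f,g]\!]]\!]_L=[\![f,[\![e,g]\!]]\!]_R+[\![[\![e,f]\!],g]\!]_L$; $\langle\!\langle e,\partial\langle\!\langle f,g\rangle\!\rangle\rangle\!\rangle_L=\langle\!\langle f,[\![e,g]\!]\rangle\!\rangle_R+\langle\!\langle[\![e,f]\!],g\rangle\!\rangle_L$. Representation spaces: $A_N$ is the commutative algebra representing $B\mapsto\operatorname{Hom}_{\mathrm{alg}}(A,M_N(B))$ on commutative algebras; it is generated by symbols $a_{ij}$ ($a\in A$, $1\le i,j\le N$), linear in $a$, with $(ab)_{ij}=\sum_t a_{it}b_{tj}$ and $1_{ij}=\delta_{ij}$. $E_N$ is the $A_N$-module generated by symbols $e_{ij}$, linear in $e\in E$, subject to $(ae)_{ij}=\sum_ta_{it}e_{tj}$ and $(ea)_{ij}=\sum_ta_{tj}e_{it}$. Repeated indices are summed. Courant--Dorfman algebra: a commutative algebra $C$, a $C$-module $M$, a symmetric $C$-bilinear form $\langle-,-\rangle\colon M\otimes M\to C$, a derivation $\partial\colon C\to M$, and a bilinear bracket $[-,-]$ on $M$ such that for $n,n_1,n_2,n_3\in M$, $c,d\in C$: $[n_1,cn_2]=c[n_1,n_2]+\langle n_1,\partial c\rangle n_2$; $\langle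 n_1,\partial\langle n_2,n_3\rangle\rangle=\langle[n_1,n_2],n_3\rangle+\langle n_2,[n_1,n_3]\rangle$; $\partial\langle n_1,n_2\rangle=[n_1,n_2]+[n_2,n_1]$; $[n_1,[n_2,n_3]]=[[n_1,n_2],n_3]+[n_2,[n_1,n_3]]$; $[\partial c,n]=0$; $\langle\partial c,\partial d\rangle=0$. *)

(* Defs.v *)
From HB Require Import structures.
From mathcomp Require Import all_boot all_order all_algebra.
Set Implicit Arguments. Unset Strict Implicit. Unset Printing Implicit Defensive.
Import GRing.Theory.
Local Open Scope ring_scope.

Definition lin (R : pzRingType) (U V : lmodType R) (f : U -> V) : Prop :=
  forall (k : R) (u1 u2 : U), f (k *: u1 + u2) = k *: f u1 + f u2.

Definition bilin (R : pzRingType) (U V W : lmodType R) (b : U -> V -> W) : Prop :=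
  (forall k u1 u2 v, b (k *: u1 + u2) v = k *: b u1 v + b u2 v) /\
  (forall k u v1 v2, b u (k *: v1 + v2) = k *: b u v1 + b u v2).

Definition trilin (R : pzRingType) (U V X W : lmodType R) (t : U -> V -> X -> W) : Prop :=
  (forall k u1 u2 v x, t (k *: u1 + u2) v x = k *: t u1 v x + t u2 v x) /\
  (forall k u v1 v2 x, t u (k *: v1 + v2) x = k *: t u v1 x + t u v2 x) /\
  (forall k u v x1 x2, t u v (k *: x1 + x2) = k *: t u v x1 + t u v x2).

(* Tensor products over K.  An element of U (x) V is represented by a finite *)
(* list of pairs (sum of elementary tensors, Sweedler notation); two lists   *)
(* represent the same tensor iff every bilinear map takes the same value on  *)
(* them (universal property of U (x) V).  Likewise for U (x) V (x) X.        *)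

Definition teq2 (K : fieldType) (U V : lmodType K) (s t : seq (U * V)) : Prop :=
  forall (W : lmodType K) (b : U -> V -> W), bilin b ->
    \sum_(p <- s) b p.1 p.2 = \sum_(p <- t) b p.1 p.2.

Definition teq3 (K : fieldType) (U V X : lmodType K) (s t : seq (U * V * X)) : Prop :=
  forall (W : lmodType K) (b : U -> V -> X -> W), trilin b ->
    \sum_(p <- s) b p.1.1 p.1.2 p.2 = \sum_(p <- t) b p.1.1 p.1.2 p.2.

Definition tscale (K : fieldType) (U V : lmodType K) (k : K) (s : seq (U * V)) :
  seq (U * V) := [seq (k *: p.1, p.2) | p <- s].

Definition tswap (U V : Type) (s : seq (U * V)) : seq (V * U) :=
  [seq (p.2, p.1) | p <- s].

Definition is_bimodule (K : fieldType) (A : algType K) (E : lmodType K)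
    (la : A -> E -> E) (ra : E -> A -> E) : Prop :=
  bilin la /\ bilin ra /\
  (forall a b e, la (a * b) e = la a (la b e)) /\
  (forall a b e, ra e (a * b) = ra (ra e a) b) /\
  (forall a b e, la a (ra e b) = ra (la a e) b) /\
  (forall e, la 1 e = e) /\
  (forall e, ra e 1 = e).

Definition is_bimod_derivation (K : fieldType) (A : algType K) (E : lmodType K)
    (la : A -> E -> E) (ra : E -> A -> E) (d : A -> E) : Prop :=
  lin d /\ forall a b, d (a * b) = ra (d a) b + la a (d b).

(* dp e f  : a representative of <<e,f>> in A (x) A                          *)
(* dbl e f : a representative of [[e,f]]_l in E (x) A                        *)
(* dbr e f : a representative of [[e,f]]_r in A (x) E                        *)

Record is_double_CD_algebra (K : fieldType) (A : algType K) (E : lmodType K)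
    (la : A -> E -> E) (ra : E -> A -> E) (d : A -> E)
    (dp : E -> E -> seq (A * A)) (dbl : E -> E -> seq (E * A))
    (dbr : E -> E -> seq (A * E)) : Prop := {
  dcd_bimodule : is_bimodule la ra;
  dcd_derivation : is_bimod_derivation la ra d;
  dcd_pair_lin_l : forall k e1 e2 f,
    teq2 (dp (k *: e1 + e2) f) (tscale k (dp e1 f) ++ dp e2 f);
  dcd_pair_lin_r : forall k e f1 f2,
    teq2 (dp e (k *: f1 + f2)) (tscale k (dp e f1) ++ dp e f2);
  (* f |-> <<e,f>> is a bimodule map to (A (x) A)_out *)
  dcd_pair_out_l : forall e a f,
    teq2 (dp e (la a f)) [seq (a * p.1, p.2) | p <- dp e f];
  dcd_pair_out_r : forall e f b,
    teq2 (dp e (ra f b)) [seq (p.1, p.2 * b) | p <- dp e f];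
  (* f |-> <<f,e>> is a bimodule map to (A (x) A)_inn *)
  dcd_pair_inn_l : forall e a f,
    teq2 (dp (la a f) e) [seq (p.1, a * p.2) | p <- dp f e];
  dcd_pair_inn_r : forall e f b,
    teq2 (dp (ra f b) e) [seq (p.1 * b, p.2) | p <- dp f e];
  dcd_pair_sym : forall e f, teq2 (dp e f) (tswap (dp f e));
  dcd_brl_lin_l : forall k e1 e2 f,
    teq2 (dbl (k *: e1 + e2) f) (tscale k (dbl e1 f) ++ dbl e2 f);
  dcd_brl_lin_r : forall k e f1 f2,
    teq2 (dbl e (k *: f1 + f2)) (tscale k (dbl e f1) ++ dbl e f2);
  dcd_brr_lin_l : forall k e1 e2 f,
    teq2 (dbr (k *: e1 + e2) f) (tscale k (dbr e1 f) ++ dbr e2 f);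
  dcd_brr_lin_r : forall k e f1 f2,
    teq2 (dbr e (k *: f1 + f2)) (tscale k (dbr e f1) ++ dbr e f2);
  (* d<<e,f>> = [[e,f]] + [[f,e]]^sigma  (E (x) A and A (x) E components) *)
  dcd_ax1_EA : forall e f,
    teq2 [seq (d p.1, p.2) | p <- dp e f] (dbl e f ++ tswap (dbr f e));
  dcd_ax1_AE : forall e f,
    teq2 [seq (p.1, d p.2) | p <- dp e f] (dbr e f ++ tswap (dbl f e));
  dcd_ax2_l : forall a e, teq2 (dbl (d a) e) [::];
  dcd_ax2_r : forall a e, teq2 (dbr (d a) e) [::];
  dcd_ax3 : forall a b, teq2 (dp (d a) (d b)) [::];
  (* [[e, fa]] = [[e,f]] a + f <<e, da>> *)
  dcd_ax4_EA : forall e f a,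
    teq2 (dbl e (ra f a))
         ([seq (p.1, p.2 * a) | p <- dbl e f] ++ [seq (ra f p.1, p.2) | p <- dp e (d a)]);
  dcd_ax4_AE : forall e f a,
    teq2 (dbr e (ra f a)) [seq (p.1, ra p.2 a) | p <- dbr e f];
  (* [[e, af]] = a [[e,f]] + <<e, da>> f *)
  dcd_ax5_EA : forall e f a,
    teq2 (dbl e (la a f)) [seq (la a p.1, p.2) | p <- dbl e f];
  dcd_ax5_AE : forall e f a,
    teq2 (dbr e (la a f))
         ([seq (a * p.1, p.2) | p <- dbr e f] ++ [seq (p.1, la p.2 f) | p <- dp e (d a)]);
  (* [[e,[[f,g]]]]_L = [[f,[[e,g]]]]_R + [[[[e,f]],g]]_L, in the three
     components E(x)A(x)A, A(x)E(x)A, A(x)A(x)E *)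
  dcd_ax6_EAA : forall e f g,
    teq3 (flatten [seq [seq (q.1, q.2, p.2) | q <- dbl e p.1] | p <- dbl f g])
         (flatten [seq [seq (p.1, q.1, q.2) | q <- dp f (d p.2)] | p <- dbl e g] ++
          flatten [seq [seq (q.1, p.2, q.2) | q <- dbl p.1 g] | p <- dbl e f]);
  dcd_ax6_AEA : forall e f g,
    teq3 (flatten [seq [seq (q.1, q.2, p.2) | q <- dbr e p.1] | p <- dbl f g])
         (flatten [seq [seq (p.1, q.1, q.2) | q <- dbl f p.2] | p <- dbr e g] ++
          flatten [seq [seq (q.1, d p.2, q.2) | q <- dp p.1 g] | p <- dbl e f] ++
          flatten [seq [seq (- q.1, p.2, q.2) | q <- dp (d p.1) g] | p <- dbr e f]);
  dcd_ax6_AAE : forall e f g,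
    teq3 (flatten [seq [seq (q.1, q.2, p.2) | q <- dp e (d p.1)] | p <- dbr f g])
         (flatten [seq [seq (p.1, q.1, q.2) | q <- dbr f p.2] | p <- dbr e g] ++
          flatten [seq [seq (q.1, p.2, q.2) | q <- dbr p.1 g] | p <- dbl e f]);
  (* <<e, d<<f,g>>>>_L = <<f,[[e,g]]>>_R + <<[[e,f]],g>>_L  in A(x)A(x)A *)
  dcd_ax7 : forall e f g,
    teq3 (flatten [seq [seq (q.1, q.2, p.2) | q <- dp e (d p.1)] | p <- dp f g])
         (flatten [seq [seq (p.1, q.1, q.2) | q <- dp f p.2] | p <- dbr e g] ++
          flatten [seq [seq (q.1, p.2, q.2) | q <- dp p.1 g] | p <- dbl e f])
}.

(* Representation spaces A_N and E_N, given by their universal properties    *)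
(* (equivalently: by the generators and relations of the paper).             *)

(* y : A -> M_N(B) (entrywise) is a unital algebra morphism *)
Definition rep_rel (K : fieldType) (A : algType K) (N : nat) (B : comAlgType K)
    (y : A -> 'I_N -> 'I_N -> B) : Prop :=
  [/\ (forall i j, lin (fun a => y a i j)),
      (forall a b i j, y (a * b) i j = \sum_(t < N) y a i t * y b t j) &
      (forall i j, y 1 i j = (i == j)%:R)].

Definition is_alg_morph (K : fieldType) (B1 B2 : comAlgType K) (phi : B1 -> B2) : Prop :=
  [/\ lin phi, (forall b c, phi (b * c) = phi b * phi c) & phi 1 = 1].

(* (C, x) is the representation algebra A_N with generators x a i j = a_ij *)
Definition is_rep_algebra (K : fieldType) (A : algType K) (N : nat)
    (C : comAlgType K) (x : A -> 'I_N -> 'I_N -> C) : Prop :=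
  rep_rel x /\
  forall (B : comAlgType K) (y : A -> 'I_N -> 'I_N -> B), rep_rel y ->
    exists phi : C -> B,
      [/\ is_alg_morph phi, (forall a i j, phi (x a i j) = y a i j) &
          forall psi : C -> B, is_alg_morph psi ->
            (forall a i j, psi (x a i j) = y a i j) -> forall c, psi c = phi c].

Definition rep_mod_rel (K : fieldType) (A : algType K) (E : lmodType K)
    (la : A -> E -> E) (ra : E -> A -> E) (N : nat)
    (C : comAlgType K) (x : A -> 'I_N -> 'I_N -> C)
    (M : lmodType C) (eps : E -> 'I_N -> 'I_N -> M) : Prop :=
  [/\ (forall (k : K) e1 e2 i j, eps (k *: e1 + e2) i j = k%:A *: eps e1 i j + eps e2 i j),
      (forall a e i j, eps (la a e) i j = \sum_(t < N) x a i t *: eps e t j) &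
      (forall a e i j, eps (ra e a) i j = \sum_(t < N) x a t j *: eps e i t)].

(* (M, eps) is the representation module E_N over C = A_N, generators e_ij *)
Definition is_rep_module (K : fieldType) (A : algType K) (E : lmodType K)
    (la : A -> E -> E) (ra : E -> A -> E) (N : nat)
    (C : comAlgType K) (x : A -> 'I_N -> 'I_N -> C)
    (M : lmodType C) (eps : E -> 'I_N -> 'I_N -> M) : Prop :=
  rep_mod_rel la ra x eps /\
  forall (M' : lmodType C) (eps' : E -> 'I_N -> 'I_N -> M'), rep_mod_rel la ra x eps' ->
    exists phi : M -> M',
      [/\ lin phi, (forall e i j, phi (eps e i j) = eps' e i j) &
          forall psi : M -> M', lin psi ->
            (forall e i j, psi (eps e i j) = eps' e i j) -> forall m, psi m = phi m].

Record is_CD_algebra (K : fieldType) (C : comAlgType K) (M : lmodType C)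
    (pair : M -> M -> C) (d : C -> M) (br : M -> M -> M) : Prop := {
  cd_pair_lin : forall (c : C) m1 m2 n, pair (c *: m1 + m2) n = c * pair m1 n + pair m2 n;
  cd_pair_sym : forall m n, pair m n = pair n m;
  cd_d_lin : forall (k : K) c1 c2, d (k *: c1 + c2) = k%:A *: d c1 + d c2;
  cd_d_leibniz : forall c1 c2, d (c1 * c2) = c1 *: d c2 + c2 *: d c1;
  cd_br_lin_l : forall (k : K) m1 m2 n, br (k%:A *: m1 + m2) n = k%:A *: br m1 n + br m2 n;
  cd_br_lin_r : forall (k : K) m n1 n2, br m (k%:A *: n1 + n2) = k%:A *: br m n1 + br m n2;
  cd_leibniz : forall n1 n2 (c : C), br n1 (c *: n2) = c *: br n1 n2 + pair n1 (d c) *: n2;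
  cd_invariance : forall n1 n2 n3,
    pair n1 (d (pair n2 n3)) = pair (br n1 n2) n3 + pair n2 (br n1 n3);
  cd_symmetric : forall n1 n2, d (pair n1 n2) = br n1 n2 + br n2 n1;
  cd_jacobi : forall n1 n2 n3, br n1 (br n2 n3) = br (br n1 n2) n3 + br n2 (br n1 n3);
  cd_br_d : forall (c : C) n, br (d c) n = 0;
  cd_pair_dd : forall c c' : C, pair (d c) (d c') = 0
}.

(* Main.v *)
Require Import Defs.
From HB Require Import structures.
From mathcomp Require Import all_boot all_order all_algebra ring.
From Stdlib Require Import IndefiniteDescription.
Set Implicit Arguments. Unset Strict Implicit. Unset Printing Implicit Defensive.
Import GRing.Theory.
Local Open Scope ring_scope.

Lemma algM (K : fieldType) (C : comAlgType K) (a b : K) : (a%:A * b%:A : C) = (a * b)%:A.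
Proof. by rewrite -scalerAl mul1r scalerA. Qed.

Section Restr.
Variables (K : fieldType) (C : comAlgType K) (V : lmodType C).
Definition restrK : Type := V.
HB.instance Definition _ := GRing.Zmodule.on restrK.
Definition rscale (k : K) (v : restrK) : restrK := (k%:A : C) *: (v : V).
Lemma rscaleA a b v : rscale a (rscale b v) = rscale (a * b) v.
Proof. by rewrite /rscale scalerA algM. Qed.
Lemma rscale1 : left_id 1 rscale.
Proof. by move=> v; rewrite /rscale scale1r scale1r. Qed.
Lemma rscaleDr : right_distributive rscale +%R.
Proof. by move=> a u v; rewrite /rscale scalerDr. Qed.
Lemma rscaleDl v : {morph rscale^~ v: a b / a + b}.
Proof. by move=> a b; rewrite /rscale scalerDl scalerDl. Qed.
HB.instance Definition _ := GRing.Zmodule_isLmodule.Build K restrK rscaleA rscale1 rscaleDr rscaleDl.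
Lemma restrK_scaleE (k : K) (v : restrK) : k *: v = (k%:A : C) *: (v : V).
Proof. by []. Qed.
End Restr.

Section Dual.
Variables (K : fieldType) (C : comAlgType K) (V : lmodType C).
Definition dual : Type := (C * V)%type.
HB.instance Definition _ := GRing.Zmodule.on dual.
Definition dmul (p q : dual) : dual := (p.1 * q.1, p.1 *: q.2 + q.1 *: p.2).
Definition done_ : dual := (1, 0).
Lemma dmulA : associative dmul.
Proof. move=> [a u] [b v] [c w]; rewrite /dmul /=; congr pair; first by rewrite mulrA.
rewrite !scalerDr !scalerA -addrA [c * a]mulrC [b * c]mulrC; congr (_ + _).
Qed.
Lemma dmulC : commutative dmul.
Proof. by move=> [a u] [b v]; rewrite /dmul /= mulrC addrC. Qed.
Lemma dmul1 : left_id done_ dmul.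
Proof. by move=> [a u]; rewrite /dmul /= mul1r scale1r scaler0 addr0. Qed.
Lemma dmulDl : left_distributive dmul +%R.
Proof. move=> [a u] [b v] [c w]; rewrite /dmul /=; congr pair; first by rewrite mulrDl.
by rewrite scalerDl scalerDr addrACA. Qed.
Lemma done_neq0 : done_ != 0.
Proof. apply/negP => /eqP [] /eqP; by rewrite oner_eq0. Qed.
HB.instance Definition _ := GRing.Zmodule_isComNzRing.Build dual dmulA dmulC dmul1 dmulDl done_neq0.
Definition dscale (k : K) (p : dual) : dual := (k *: p.1, (k%:A : C) *: p.2).
Lemma dscaleA a b v : dscale a (dscale b v) = dscale (a * b) v.
Proof. by rewrite /dscale /= scalerA scalerA algM. Qed.
Lemma dscale1 : left_id 1 dscale.
Proof. by move=> [u v]; rewrite /dscale /= !scale1r. Qed.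
Lemma dscaleDr : right_distributive dscale +%R.
Proof. by move=> a [u v] [u' v']; rewrite /dscale /= !scalerDr. Qed.
Lemma dscaleDl v : {morph dscale^~ v: a b / a + b}.
Proof. by move=> a b; rewrite /dscale /= !scalerDl. Qed.
HB.instance Definition _ := GRing.Zmodule_isLmodule.Build K dual dscaleA dscale1 dscaleDr dscaleDl.
Lemma dscaleAl (k : K) (u v : dual) : k *: (u * v) = (k *: u) * v.
Proof. case: u v => [a u] [b w]; rewrite /GRing.scale /= /dscale /GRing.mul /= /dmul /=.
congr pair; first by rewrite scalerAl.
by rewrite scalerDr !scalerA -scalerAl mul1r mulrC. Qed.
HB.instance Definition _ := GRing.Lmodule_isLalgebra.Build K dual dscaleAl.
HB.instance Definition _ := GRing.Lalgebra_isComAlgebra.Build K dual.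

Lemma dual_addE (p q : dual) : p + q = (p.1 + q.1, p.2 + q.2). Proof. by []. Qed.
Lemma dual_mulE (p q : dual) : p * q = (p.1 * q.1, p.1 *: q.2 + q.1 *: p.2). Proof. by []. Qed.
Lemma dual_scaleE (k : K) (p : dual) : k *: p = (k *: p.1, (k%:A : C) *: p.2). Proof. by []. Qed.
Lemma dual_oneE : (1 : dual) = (1, 0). Proof. by []. Qed.
Lemma dual_zeroE : (0 : dual) = (0, 0). Proof. by []. Qed.
Lemma dual_oppE (p : dual) : - p = (- p.1, - p.2). Proof. by []. Qed.
Lemma dual_sumE (I : Type) (s : seq I) (F : I -> dual) :
  \sum_(i <- s) F i = (\sum_(i <- s) (F i).1, \sum_(i <- s) (F i).2).
Proof. elim: s => [|a s IH]; first by rewrite !big_nil.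
by rewrite !big_cons IH. Qed.

(* embedding for the ring trick *)
Definition emb (v : V) : dual := (0, v).
Definition sc (c : C) : dual := (c, 0).
Lemma emb_inj : injective emb. Proof. by move=> u v []. Qed.
Lemma embD u v : emb (u + v) = emb u + emb v. Proof. by rewrite /emb dual_addE /= addr0. Qed.
Lemma embN u : emb (- u) = - emb u. Proof. by rewrite /emb dual_oppE /= oppr0. Qed.
Lemma emb0 : emb 0 = 0. Proof. by []. Qed.
Lemma embZ (c : C) u : emb (c *: u) = sc c * emb u.
Proof. by rewrite /emb /sc dual_mulE /= mulr0 scaler0 addr0. Qed.
Lemma scD a b : sc (a + b) = sc a + sc b. Proof. by rewrite /sc dual_addE /= addr0. Qed.
Lemma scN a : sc (- a) = - sc a. Proof. by rewrite /sc dual_oppE /= oppr0. Qed.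
Lemma scM a b : sc (a * b) = sc a * sc b.
Proof. by rewrite /sc dual_mulE /= !scaler0 addr0. Qed.
Lemma sc0 : sc 0 = 0. Proof. by []. Qed.
Lemma sc1 : sc 1 = 1. Proof. by []. Qed.
Lemma embsum (I : Type) (s : seq I) (F : I -> V) : emb (\sum_(i <- s) F i) = \sum_(i <- s) emb (F i).
Proof. elim: s => [|a s IH]; first by rewrite !big_nil. by rewrite !big_cons embD IH. Qed.
Lemma scsum (I : Type) (s : seq I) (F : I -> C) : sc (\sum_(i <- s) F i) = \sum_(i <- s) sc (F i).
Proof. elim: s => [|a s IH]; first by rewrite !big_nil. by rewrite !big_cons scD IH. Qed.
Definition ska (k : K) := sc (k%:A).
Lemma scZK (k : K) (c : C) : sc (k *: c) = ska k * sc c.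
Proof. by rewrite /ska -scM mulr_algl. Qed.
Lemma embsumI n (F : 'I_n -> V) : emb (\sum_(i < n) F i) = \sum_(i < n) emb (F i).
Proof. by rewrite embsum. Qed.
Lemma scsumI n (F : 'I_n -> C) : sc (\sum_(i < n) F i) = \sum_(i < n) sc (F i).
Proof. by rewrite scsum. Qed.
End Dual.

Ltac modring := apply: emb_inj; rewrite ?(embD, embN, embZ, emb0, scD, scN, scM, sc0, sc1, scZK); ring.
Ltac modringV V := apply: (@emb_inj _ _ V); rewrite ?(embD, embN, embZ, emb0, scD, scN, scM, sc0, sc1, scZK); ring.

Record cocycle (K : fieldType) (C : comAlgType K) (M V : lmodType C) := Cocycle {
  cphi :> C -> M -> V;
  cphiDl : forall c d m, cphi (c + d) m = cphi c m + cphi d m;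
  cphiDr : forall c m m', cphi c (m + m') = cphi c m + cphi c m';
  cphiM : forall c d m, cphi (c * d) m = c *: cphi d m + cphi c (d *: m) }.

Section Twist.
Variables (K : fieldType) (C : comAlgType K) (M V : lmodType C) (Phi : cocycle M V).
Lemma cPhi1 m : Phi 1 m = 0.
Proof. have := cphiM Phi 1 1 m; rewrite mulr1 scale1r scale1r => /eqP.
by rewrite -subr_eq0 opprD addrA subrr sub0r oppr_eq0 => /eqP. Qed.
Definition twist (P : cocycle M V) : Type := (M * V)%type.
HB.instance Definition _ := GRing.Zmodule.on (twist Phi).
Definition tscaleT (c : C) (p : twist Phi) : twist Phi := (c *: p.1, c *: p.2 + Phi c p.1).
Lemma tsA a b v : tscaleT a (tscaleT b v) = tscaleT (a * b) v.
Proof. rewrite /tscaleT /= cphiM !scalerA scalerDr scalerA; congr pair.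
by rewrite addrA. Qed.
Lemma ts1 : left_id 1 tscaleT.
Proof. by move=> [u v]; rewrite /tscaleT /= cPhi1 !scale1r addr0. Qed.
Lemma tsDr : right_distributive tscaleT +%R.
Proof. move=> a [u v] [u' v']; rewrite /tscaleT /=. congr pair; first by rewrite scalerDr.
by rewrite scalerDr cphiDr addrACA. Qed.
Lemma tsDl v : {morph tscaleT^~ v: a b / a + b}.
Proof. move=> a b; rewrite /tscaleT /=; congr pair; first by rewrite scalerDl.
by rewrite scalerDl cphiDl addrACA. Qed.
HB.instance Definition _ := GRing.Zmodule_isLmodule.Build C (twist Phi) tsA ts1 tsDr tsDl.
Lemma tw_scaleE c (p : twist Phi) : c *: p = (c *: p.1, c *: p.2 + Phi c p.1). Proof. by []. Qed.
Lemma tw_addE (p q : twist Phi) : p + q = (p.1 + q.1, p.2 + q.2). Proof. by []. Qed.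
Lemma tw_sumE (I : Type) (s : seq I) (F : I -> twist Phi) :
  \sum_(i <- s) F i = (\sum_(i <- s) (F i).1, \sum_(i <- s) (F i).2).
Proof. elim: s => [|a s IH]; first by rewrite !big_nil.
by rewrite !big_cons IH. Qed.
End Twist.

Lemma dbl0 (V : zmodType) (v : V) : v = v + v -> v = 0.
Proof. by move=> /eqP; rewrite -subr_eq0 opprD addrA subrr sub0r oppr_eq0 => /eqP. Qed.

Section Main.
Variables (K : fieldType) (A : algType K) (E : lmodType K)
    (la : A -> E -> E) (ra : E -> A -> E) (d : A -> E)
    (dp : E -> E -> seq (A * A)) (dbl : E -> E -> seq (E * A))
    (dbr : E -> E -> seq (A * E))
    (HDCD : is_double_CD_algebra la ra d dp dbl dbr)
    (N : nat)
    (C : comAlgType K) (x : A -> 'I_N -> 'I_N -> C) (HC : is_rep_algebra x)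
    (M : lmodType C) (eps : E -> 'I_N -> 'I_N -> M) (HM : is_rep_module la ra x eps).

Notation MK := (restrK M).
Notation I := 'I_N.

Lemma xlin i j (k : K) a b : x (k *: a + b) i j = k *: x a i j + x b i j.
Proof. by case: HC => [[H _ _] _]; apply: H. Qed.
Lemma xD i j a b : x (a + b) i j = x a i j + x b i j.
Proof. by have := xlin i j 1 a b; rewrite !scale1r. Qed.
Lemma x0 i j : x 0 i j = 0.
Proof. by have := xD i j 0 0; rewrite addr0; apply: dbl0. Qed.
Lemma xZ i j (k : K) a : x (k *: a) i j = k *: x a i j.
Proof. by have := xlin i j k a 0; rewrite !addr0 x0 addr0. Qed.
Lemma xN i j a : x (- a) i j = - x a i j.
Proof. by rewrite -scaleN1r xZ scaleN1r. Qed.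
Lemma xM a b i j : x (a * b) i j = \sum_(t < N) x a i t * x b t j.
Proof. by case: HC => [[_ H _] _]; apply: H. Qed.
Lemma x1 i j : x 1 i j = (i == j)%:R.
Proof. by case: HC => [[_ _ H] _]; apply: H. Qed.

Lemma epslin (k : K) e1 e2 i j : eps (k *: e1 + e2) i j = k%:A *: eps e1 i j + eps e2 i j.
Proof. by case: HM => [[H _ _] _]; apply: H. Qed.
Lemma epsD e1 e2 i j : eps (e1 + e2) i j = eps e1 i j + eps e2 i j.
Proof. by have := epslin 1 e1 e2 i j; rewrite !scale1r. Qed.
Lemma eps0 i j : eps 0 i j = 0.
Proof. by have := epsD 0 0 i j; rewrite addr0; apply: dbl0. Qed.
Lemma epsZ (k : K) e i j : eps (k *: e) i j = k%:A *: eps e i j.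
Proof. by have := epslin k e 0 i j; rewrite !addr0 eps0 addr0. Qed.
Lemma epsN e i j : eps (- e) i j = - eps e i j.
Proof. by rewrite -scaleN1r epsZ scaleN1r scaleN1r. Qed.
Lemma eps_la a e i j : eps (la a e) i j = \sum_(t < N) x a i t *: eps e t j.
Proof. by case: HM => [[_ H _] _]; apply: H. Qed.
Lemma eps_ra a e i j : eps (ra e a) i j = \sum_(t < N) x a t j *: eps e i t.
Proof. by case: HM => [[_ _ H] _]; apply: H. Qed.

Lemma dlin (k : K) a b : d (k *: a + b) = k *: d a + d b.
Proof. by case: (dcd_derivation HDCD) => H _; apply: H. Qed.
Lemma dM a b : d (a * b) = ra (d a) b + la a (d b).
Proof. by case: (dcd_derivation HDCD) => _ H; apply: H. Qed.
Lemma dD a b : d (a + b) = d a + d b.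
Proof. by have := dlin 1 a b; rewrite !scale1r. Qed.
Lemma d0 : d 0 = 0.
Proof. by have := dD 0 0; rewrite addr0; apply: dbl0. Qed.
Lemma dZ (k : K) a : d (k *: a) = k *: d a.
Proof. by have := dlin k a 0; rewrite !addr0 d0 addr0. Qed.

Section BilinFacts.
Variables (R : fieldType) (U V W : lmodType R) (b : U -> V -> W) (Hb : bilin b).
Lemma bil0l v : b 0 v = 0.
Proof. case: Hb => H _; apply: dbl0; by have := H 1 0 0 v; rewrite scale1r !addr0 scale1r. Qed.
Lemma bil0r u : b u 0 = 0.
Proof. case: Hb => _ H; apply: dbl0; by have := H 1 u 0 0; rewrite scale1r !addr0 scale1r. Qed.
Lemma bilDl u1 u2 v : b (u1 + u2) v = b u1 v + b u2 v.
Proof. by case: Hb => H _; have := H 1 u1 u2 v; rewrite !scale1r. Qed.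
Lemma bilDr u v1 v2 : b u (v1 + v2) = b u v1 + b u v2.
Proof. by case: Hb => _ H; have := H 1 u v1 v2; rewrite !scale1r. Qed.
Lemma bilZl k u v : b (k *: u) v = k *: b u v.
Proof. by case: Hb => H _; have := H k u 0 v; rewrite !addr0 bil0l addr0. Qed.
Lemma bilZr k u v : b u (k *: v) = k *: b u v.
Proof. by case: Hb => _ H; have := H k u v 0; rewrite !addr0 bil0r addr0. Qed.
Lemma bilNl u v : b (- u) v = - b u v.
Proof. by rewrite -scaleN1r bilZl scaleN1r. Qed.
Lemma bilNr u v : b u (- v) = - b u v.
Proof. by rewrite -scaleN1r bilZr scaleN1r. Qed.
Lemma sum_tscale k (s : seq (U * V)) :
  \sum_(p <- tscale k s) b p.1 p.2 = k *: \sum_(p <- s) b p.1 p.2.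
Proof. by rewrite /tscale big_map scaler_sumr; apply: eq_bigr => p _ /=; rewrite bilZl. Qed.
Lemma sum_tswap (s : seq (V * U)) :
  \sum_(p <- tswap s) b p.1 p.2 = \sum_(p <- s) b p.2 p.1.
Proof. by rewrite /tswap big_map. Qed.
End BilinFacts.

Section LinFacts.
Variables (R : pzRingType) (U V : lmodType R) (f : U -> V) (Hf : lin f).
Lemma linD' u v : f (u + v) = f u + f v.
Proof. by have := Hf 1 u v; rewrite !scale1r. Qed.
Lemma lin0' : f 0 = 0.
Proof. apply: dbl0; by rewrite -linD' addr0. Qed.
Lemma linZ' k u : f (k *: u) = k *: f u.
Proof. by have := Hf k u 0; rewrite !addr0 lin0' addr0. Qed.
Lemma linN' u : f (- u) = - f u.
Proof. by rewrite -scaleN1r linZ' scaleN1r. Qed.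
Lemma linB' u v : f (u - v) = f u - f v.
Proof. by rewrite linD' linN'. Qed.
Lemma linsum' (J : Type) (s : seq J) (F : J -> U) : f (\sum_(j <- s) F j) = \sum_(j <- s) f (F j).
Proof. elim: s => [|a s IH]; first by rewrite !big_nil lin0'. by rewrite !big_cons linD' IH. Qed.
Lemma linsumI' (F : I -> U) : f (\sum_(t < N) F t) = \sum_(t < N) f (F t).
Proof. by rewrite linsum'. Qed.
End LinFacts.

Lemma lin_comp_rel (V : lmodType C) (p : M -> V) : lin p ->
  rep_mod_rel la ra x (fun e i j => p (eps e i j)).
Proof. move=> Hp; split.
- by move=> k e1 e2 i j; rewrite epslin Hp.
- by move=> a e i j; rewrite eps_la (linsumI' Hp); apply: eq_bigr => t _; rewrite (linZ' Hp).
- by move=> a e i j; rewrite eps_ra (linsumI' Hp); apply: eq_bigr => t _; rewrite (linZ' Hp).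
Qed.

Lemma lin_uniq (V : lmodType C) (p1 p2 : M -> V) : lin p1 -> lin p2 ->
  (forall e i j, p1 (eps e i j) = p2 (eps e i j)) -> forall m, p1 m = p2 m.
Proof. move=> H1 H2 Heq m; case: HM => _ U.
have [phi [_ _ Hu]] := U V _ (lin_comp_rel H1).
by rewrite (Hu p1 H1 (fun _ _ _ => erefl)) (Hu p2 H2 (fun e i j => esym (Heq e i j))). Qed.

Lemma lin_ex (V : lmodType C) (g : E -> I -> I -> V) : rep_mod_rel la ra x g ->
  exists p : M -> V, lin p /\ forall e i j, p (eps e i j) = g e i j.
Proof. move=> Hg; case: HM => _ U; have [phi [H1 H2 _]] := U V _ Hg; by exists phi. Qed.

Lemma morph_rel (B : comAlgType K) (psi : C -> B) : is_alg_morph psi ->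
  rep_rel (fun a i j => psi (x a i j)).
Proof. case=> Hl Hm H1; split.
- move=> i j k a b /=; rewrite xlin Hl //.
- move=> a b i j; rewrite xM (linsumI' Hl); apply: eq_bigr => t _; by rewrite Hm.
- move=> i j; rewrite x1; case: (i == j); first by rewrite H1.
  by rewrite /= (lin0' Hl).
Qed.

Lemma morph_uniq (B : comAlgType K) (p1 p2 : C -> B) : is_alg_morph p1 -> is_alg_morph p2 ->
  (forall a i j, p1 (x a i j) = p2 (x a i j)) -> forall c, p1 c = p2 c.
Proof. move=> H1 H2 Heq c; case: HC => _ U.
have [phi [_ _ Hu]] := U B _ (morph_rel H1).
by rewrite (Hu p1 H1 (fun _ _ _ => erefl)) (Hu p2 H2 (fun a i j => esym (Heq a i j))). Qed.

Definition is_der (V : lmodType C) (delta : C -> V) :=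
  (forall (k : K) c c', delta (k *: c + c') = k%:A *: delta c + delta c') /\
  (forall c c', delta (c * c') = c *: delta c' + c' *: delta c).

Lemma der1 (V : lmodType C) (delta : C -> V) : is_der delta -> delta 1 = 0.
Proof. case=> _ H; apply: dbl0; by rewrite -{1}(mulr1 1) H scale1r. Qed.
Lemma derD (V : lmodType C) (delta : C -> V) : is_der delta -> forall c c', delta (c + c') = delta c + delta c'.
Proof. case=> H _ c c'; by have := H 1 c c'; rewrite !scale1r. Qed.
Lemma der0 (V : lmodType C) (delta : C -> V) : is_der delta -> delta 0 = 0.
Proof. move=> Hd; apply: dbl0; by rewrite -derD // addr0. Qed.
Lemma derN (V : lmodType C) (delta : C -> V) : is_der delta -> forall c, delta (- c) = - delta c.
Proof. move=> Hd c; apply/eqP; rewrite -addr_eq0 -derD // addrC subrr der0 //. Qed.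
Lemma derK (V : lmodType C) (delta : C -> V) : is_der delta -> forall k : K, delta k%:A = 0.
Proof. move=> Hd k; case: (Hd) => H _; by have := H k 1 0; rewrite addr0 der0 // der1 // scaler0 addr0. Qed.
Lemma dersum (V : lmodType C) (delta : C -> V) : is_der delta ->
  forall (J : Type) (s : seq J) (F : J -> C), delta (\sum_(j <- s) F j) = \sum_(j <- s) delta (F j).
Proof. move=> Hd J s F; elim: s => [|a s IH]; first by rewrite !big_nil der0.
by rewrite !big_cons derD // IH. Qed.

Lemma der_morph (V : lmodType C) (delta : C -> V) : is_der delta ->
  is_alg_morph (fun c => (c, delta c) : dual V).
Proof. move=> Hd; case: (Hd) => Hl Hm; split.
- move=> k c c'; rewrite dual_addE dual_scaleE /=; by rewrite Hl.
- move=> c c'; rewrite dual_mulE /=; by rewrite Hm.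
- by rewrite der1.
Qed.

Lemma der_uniq (V : lmodType C) (delta : C -> V) : is_der delta ->
  (forall a i j, delta (x a i j) = 0) -> forall c, delta c = 0.
Proof. move=> Hd H0 c.
have Hz : is_der (fun _ : C => 0 : V).
  split; first by move=> *; rewrite scaler0 addr0.
  by move=> *; rewrite !scaler0 addr0.
have Heq : forall a i j, ((x a i j, delta (x a i j)) : dual V) = (x a i j, 0).
  by move=> a i j; rewrite H0.
by case: (morph_uniq (der_morph Hd) (der_morph Hz) Heq c). Qed.

Lemma d1 : d 1 = 0.
Proof. have [_ [_ [_ [_ [_ [Hl1 Hr1]]]]]] := dcd_bimodule HDCD.
apply: dbl0; by rewrite -{1}(mulr1 1) dM Hl1 Hr1. Qed.

Lemma dN_ex : exists dN : C -> M, is_der dN /\ forall a i j, dN (x a i j) = eps (d a) i j.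
Proof.
pose y a i j : dual M := (x a i j, eps (d a) i j).
have Hy : rep_rel y.
  split.
  - move=> i j k a b; rewrite /y dual_addE dual_scaleE /= xlin dlin epslin //.
  - move=> a b i j; rewrite /y dual_sumE /= xM dM epsD eps_ra eps_la addrC.
    rewrite -big_split /=; congr pair; apply: eq_bigr => t _.
  - move=> i j; rewrite /y x1 d1 eps0; case: (i == j) => /=; first by rewrite dual_oneE. by [].
case: (HC.2 _ _ Hy) => phi [[Hl Hm H1] Hg _].
have Hfst : forall c, (phi c).1 = c.
  move=> c; have Hmf : is_alg_morph (fun c => (phi c).1).
    split.
    - by move=> k u v /=; rewrite Hl.
    - by move=> u v /=; rewrite Hm.
    - by rewrite H1.
  have Hid : is_alg_morph (fun c : C => c) by split.
  apply: (morph_uniq Hmf Hid) => a i j /=; by rewrite Hg.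
exists (fun c => (phi c).2); split; last by move=> a i j; rewrite Hg.
split.
- by move=> k c c'; rewrite Hl.
- by move=> c c'; rewrite Hm /= !Hfst.
Qed.

Lemma tw_uniq (V : lmodType C) (Phi : C -> M -> V) (B1 B2 : M -> V) :
  (forall c m m', B1 (c *: m + m') = c *: B1 m + Phi c m + B1 m') ->
  (forall c m m', B2 (c *: m + m') = c *: B2 m + Phi c m + B2 m') ->
  (forall e i j, B1 (eps e i j) = B2 (eps e i j)) -> forall m, B1 m = B2 m.
Proof. move=> H1 H2 Heq m.
have Hl : lin (fun m => B1 m - B2 m).
  move=> c u v; rewrite H1 H2; modring.
have Hz : lin (fun _ : M => 0 : V) by move=> *; rewrite scaler0 addr0.
apply/eqP; rewrite -subr_eq0; apply/eqP.
by apply: (lin_uniq Hl Hz) => e i j; rewrite Heq subrr. Qed.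

Lemma tw_ex (V : lmodType C) (Phi : cocycle M V) (g : E -> I -> I -> V) :
  (forall (k : K) e1 e2 i j, g (k *: e1 + e2) i j = k%:A *: g e1 i j + Phi k%:A (eps e1 i j) + g e2 i j) ->
  (forall a e i j, g (la a e) i j = \sum_(t < N) (x a i t *: g e t j + Phi (x a i t) (eps e t j))) ->
  (forall a e i j, g (ra e a) i j = \sum_(t < N) (x a t j *: g e i t + Phi (x a t j) (eps e i t))) ->
  exists B : M -> V, (forall c m m', B (c *: m + m') = c *: B m + Phi c m + B m') /\
                     forall e i j, B (eps e i j) = g e i j.
Proof. move=> R1 R2 R3.
pose y e i j : twist Phi := (eps e i j, g e i j).
have Hy : rep_mod_rel la ra x y.
  split.
  - by move=> k e1 e2 i j; rewrite /y tw_addE tw_scaleE /= epslin R1.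
  - move=> a e i j; rewrite /y tw_sumE /= eps_la R2; congr pair.
  - move=> a e i j; rewrite /y tw_sumE /= eps_ra R3; congr pair.
have [phi [Hl Hg]] := lin_ex Hy.
have Hfst : forall m, (phi m).1 = m.
  apply: (@lin_uniq M (fun m => (phi m).1) (fun m => m)).
  - by move=> c u v; rewrite Hl.
  - by [].
  - by move=> e i j; rewrite Hg.
exists (fun m => (phi m).2); split; last by move=> e i j; rewrite Hg.
by move=> c m m'; rewrite Hl /= Hfst.
Qed.

Lemma lin_comb (V : lmodType C) (p1 p2 : M -> V) (c : C) : lin p1 -> lin p2 ->
  lin (fun m => c *: p1 m + p2 m).
Proof. move=> H1 H2 k u v; rewrite H1 H2; modring. Qed.
Lemma lin_sumZ (V : lmodType C) (p : I -> M -> V) (c : I -> C) : (forall t, lin (p t)) ->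
  lin (fun m => \sum_(t < N) c t *: p t m).
Proof. move=> H k u v; rewrite scaler_sumr -big_split; apply: eq_bigr => t _ /=.
rewrite H; modring. Qed.

Lemma bil_xx u j i v : bilin (fun a b : A => x a u j * x b i v : C).
Proof. split.
- by move=> k a1 a2 b; rewrite xlin mulrDl scalerAl.
- by move=> k a b1 b2; rewrite xlin mulrDr scalerAr.
Qed.

Definition P e f i j u v : C := \sum_(p <- dp e f) x p.1 u j * x p.2 i v.

Lemma teqP (U V : lmodType K) (s t : seq (U * V)) (W : lmodType K) (b : U -> V -> W) :
  teq2 s t -> bilin b -> \sum_(p <- s) b p.1 p.2 = \sum_(p <- t) b p.1 p.2.
Proof. by move=> H Hb; apply: H. Qed.

Lemma P_linr (k : K) e f1 f2 i j u v : P e (k *: f1 + f2) i j u v = k%:A * P e f1 i j u v + P e f2 i j u v.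
Proof. rewrite /P (teqP (dcd_pair_lin_r HDCD k e f1 f2) (bil_xx u j i v)).
by rewrite big_cat /= (sum_tscale (bil_xx u j i v)) mulr_algl. Qed.
Lemma P_linl (k : K) e1 e2 f i j u v : P (k *: e1 + e2) f i j u v = k%:A * P e1 f i j u v + P e2 f i j u v.
Proof. rewrite /P (teqP (dcd_pair_lin_l HDCD k e1 e2 f) (bil_xx u j i v)).
by rewrite big_cat /= (sum_tscale (bil_xx u j i v)) mulr_algl. Qed.
Lemma P_la_r e a f i j u v : P e (la a f) i j u v = \sum_(t < N) x a u t * P e f i j t v.
Proof. rewrite /P (teqP (dcd_pair_out_l HDCD e a f) (bil_xx u j i v)) big_map /=.
under eq_bigr do rewrite xM mulr_suml.
rewrite exchange_big /=; apply: eq_bigr => t _; rewrite mulr_sumr; apply: eq_bigr => p _.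
by rewrite mulrA. Qed.
Lemma P_ra_r e f b i j u v : P e (ra f b) i j u v = \sum_(t < N) x b t v * P e f i j u t.
Proof. rewrite /P (teqP (dcd_pair_out_r HDCD e f b) (bil_xx u j i v)) big_map /=.
under eq_bigr do rewrite xM mulr_sumr.
rewrite exchange_big /=; apply: eq_bigr => t _; rewrite mulr_sumr; apply: eq_bigr => p _.
by rewrite mulrA mulrC. Qed.
Lemma P_la_l e a f i j u v : P (la a e) f i j u v = \sum_(t < N) x a i t * P e f t j u v.
Proof. rewrite /P (teqP (dcd_pair_inn_l HDCD f a e) (bil_xx u j i v)) big_map /=.
under eq_bigr do rewrite xM mulr_sumr.
rewrite exchange_big /=; apply: eq_bigr => t _; rewrite mulr_sumr; apply: eq_bigr => p _.
by rewrite mulrCA. Qed.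
Lemma P_ra_l e f b i j u v : P (ra e b) f i j u v = \sum_(t < N) x b t j * P e f i t u v.
Proof. rewrite /P (teqP (dcd_pair_inn_r HDCD f e b) (bil_xx u j i v)) big_map /=.
under eq_bigr do rewrite xM mulr_suml.
rewrite exchange_big /=; apply: eq_bigr => t _; rewrite mulr_sumr; apply: eq_bigr => p _.
by rewrite mulrCA mulrA. Qed.
Lemma P_sym e f i j u v : P e f i j u v = P f e u v i j.
Proof. rewrite /P (teqP (dcd_pair_sym HDCD e f) (bil_xx u j i v)) /tswap big_map /=.
by apply: eq_bigr => p _; rewrite mulrC. Qed.

Lemma Lpair_ex e i j : exists p : M -> C^o, lin p /\ forall f u v, p (eps f u v) = P e f i j u v.
Proof. apply: lin_ex; split.
- by move=> k f1 f2 u v; rewrite P_linr.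
- by move=> a f u v; rewrite P_la_r.
- by move=> a f u v; rewrite P_ra_r.
Qed.
Definition Lpair e i j := proj1_sig (constructive_indefinite_description _ (Lpair_ex e i j)).
Lemma Lpair_lin e i j : lin (Lpair e i j).
Proof. by case: (proj2_sig (constructive_indefinite_description _ (Lpair_ex e i j))). Qed.
Lemma Lpair_gen e i j f u v : Lpair e i j (eps f u v) = P e f i j u v.
Proof. by case: (proj2_sig (constructive_indefinite_description _ (Lpair_ex e i j))) => _ H; apply: H. Qed.

Lemma Rpair_ex (n : M) : exists p : M -> C^o, lin p /\ forall e i j, p (eps e i j) = Lpair e i j n.
Proof. apply: lin_ex; split.
- move=> k e1 e2 i j.
  apply: (@lin_uniq C^o (Lpair (k *: e1 + e2) i j) (fun n => k%:A *: Lpair e1 i j n + Lpair e2 i j n)).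
  + exact: Lpair_lin.
  + by apply: lin_comb; apply: Lpair_lin.
  + by move=> f u v; rewrite !Lpair_gen P_linl.
- move=> a e i j.
  apply: (@lin_uniq C^o (Lpair (la a e) i j) (fun n => \sum_(t < N) x a i t *: Lpair e t j n)).
  + exact: Lpair_lin.
  + by apply: lin_sumZ => t; apply: Lpair_lin.
  + by move=> f u v; rewrite Lpair_gen P_la_l; apply: eq_bigr => t _; rewrite Lpair_gen.
- move=> a e i j.
  apply: (@lin_uniq C^o (Lpair (ra e a) i j) (fun n => \sum_(t < N) x a t j *: Lpair e i t n)).
  + exact: Lpair_lin.
  + by apply: lin_sumZ => t; apply: Lpair_lin.
  + by move=> f u v; rewrite Lpair_gen P_ra_l; apply: eq_bigr => t _; rewrite Lpair_gen.
Qed.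
Definition Rpair n := proj1_sig (constructive_indefinite_description _ (Rpair_ex n)).
Lemma Rpair_lin n : lin (Rpair n).
Proof. by case: (proj2_sig (constructive_indefinite_description _ (Rpair_ex n))). Qed.
Lemma Rpair_gen n e i j : Rpair n (eps e i j) = Lpair e i j n.
Proof. by case: (proj2_sig (constructive_indefinite_description _ (Rpair_ex n))) => _ H; apply: H. Qed.

Definition pair (m n : M) : C := Rpair n m.

Lemma pair_genl e i j n : pair (eps e i j) n = Lpair e i j n.
Proof. exact: Rpair_gen. Qed.
Lemma pair_gen e i j f u v : pair (eps e i j) (eps f u v) = P e f i j u v.
Proof. by rewrite pair_genl Lpair_gen. Qed.
Lemma pair_linl c m1 m2 n : pair (c *: m1 + m2) n = c * pair m1 n + pair m2 n.
Proof. exact: Rpair_lin. Qed.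
Lemma pair_linr c m n1 n2 : pair m (c *: n1 + n2) = c * pair m n1 + pair m n2.
Proof.
apply: (@lin_uniq C^o (fun m => pair m (c *: n1 + n2)) (fun m => (c * pair m n1 + pair m n2 : C^o))).
- by move=> k u v; rewrite /pair Rpair_lin.
- move=> k u v /=; rewrite !pair_linl /GRing.scale /=; ring.
- by move=> e i j; rewrite !pair_genl Lpair_lin.
Qed.
Lemma pair_sym m n : pair m n = pair n m.
Proof.
have Hg : forall e i j n, pair (eps e i j) n = pair n (eps e i j).
  move=> e i j {}n.
  apply: (@lin_uniq C^o (fun n => pair (eps e i j) n) (fun n => pair n (eps e i j))).
  - by move=> k u v; rewrite pair_linr.
  - by move=> k u v; rewrite pair_linl.
  - by move=> f u v; rewrite !pair_gen P_sym.
apply: (@lin_uniq C^o (fun m => pair m n) (fun m => pair n m)) => //.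
- by move=> k u v; rewrite pair_linl.
- by move=> k u v; rewrite pair_linr.
Qed.

Definition dN : C -> M := proj1_sig (constructive_indefinite_description _ dN_ex).
Lemma dN_der : is_der dN.
Proof. by case: (proj2_sig (constructive_indefinite_description _ dN_ex)). Qed.
Lemma dN_gen a i j : dN (x a i j) = eps (d a) i j.
Proof. by case: (proj2_sig (constructive_indefinite_description _ dN_ex)) => _ H; apply: H. Qed.
Lemma dNM c c' : dN (c * c') = c *: dN c' + c' *: dN c.
Proof. by case: dN_der => _ H; apply: H. Qed.
Lemma dND c c' : dN (c + c') = dN c + dN c'.
Proof. exact: (derD dN_der). Qed.
Lemma dNK (k : K) : dN k%:A = 0.
Proof. exact: (derK dN_der). Qed.
Lemma dNlin (k : K) c c' : dN (k *: c + c') = k%:A *: dN c + dN c'.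
Proof. by case: dN_der => H _; apply: H. Qed.

Lemma pair0r m : pair m 0 = 0.
Proof. apply: dbl0; by rewrite -{1}(addr0 0) -{1}(scale1r (0 : M)) pair_linr mul1r. Qed.
Lemma pair0l m : pair 0 m = 0.
Proof. by rewrite pair_sym pair0r. Qed.
Lemma pairDr m n n' : pair m (n + n') = pair m n + pair m n'.
Proof. by rewrite -{1}(scale1r n) pair_linr mul1r. Qed.
Lemma pairDl m m' n : pair (m + m') n = pair m n + pair m' n.
Proof. by rewrite -{1}(scale1r m) pair_linl mul1r. Qed.
Lemma pairZr c m n : pair m (c *: n) = c * pair m n.
Proof. by rewrite -(addr0 (c *: n)) pair_linr pair0r addr0. Qed.
Lemma pairZl c m n : pair (c *: m) n = c * pair m n.
Proof. by rewrite -(addr0 (c *: m)) pair_linl pair0l addr0. Qed.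
Lemma pairNr m n : pair m (- n) = - pair m n.
Proof. by rewrite -scaleN1r pairZr mulN1r. Qed.
Lemma pairNl m n : pair (- m) n = - pair m n.
Proof. by rewrite -scaleN1r pairZl mulN1r. Qed.
Lemma pairsumr m (J : Type) (s : seq J) (F : J -> M) : pair m (\sum_(j <- s) F j) = \sum_(j <- s) pair m (F j).
Proof. elim: s => [|a s IH]; by rewrite ?big_nil ?pair0r // !big_cons pairDr IH. Qed.
Lemma pairsuml m (J : Type) (s : seq J) (F : J -> M) : pair (\sum_(j <- s) F j) m = \sum_(j <- s) pair (F j) m.
Proof. elim: s => [|a s IH]; by rewrite ?big_nil ?pair0l // !big_cons pairDl IH. Qed.

(* the twist of [e_ij, -] *)
Definition X e i j c := pair (eps e i j) (dN c).
Lemma X_M e i j c c' : X e i j (c * c') = c * X e i j c' + c' * X e i j c.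
Proof. by rewrite /X dNM pairDr !pairZr. Qed.
Lemma X_D e i j c c' : X e i j (c + c') = X e i j c + X e i j c'.
Proof. by rewrite /X dND pairDr. Qed.
Lemma X_K e i j (k : K) : X e i j k%:A = 0.
Proof. by rewrite /X dNK pair0r. Qed.
Lemma X_gen e i j a u v : X e i j (x a u v) = P e (d a) i j u v.
Proof. by rewrite /X dN_gen pair_gen. Qed.

Definition Phi1 (e : E) (i j : I) : cocycle M M.
Proof. refine (@Cocycle K C M M (fun c n => X e i j c *: n) _ _ _).
- by move=> c c' m; rewrite X_D scalerDl.
- by move=> c m m'; rewrite scalerDr.
- by move=> c c' m; rewrite X_M; modring.
Defined.

Definition b1 i v u j (y : E) (a : A) : M := x a i v *: eps y u j.
Definition b2 u j i v (a : A) (y : E) : M := x a u j *: eps y i v.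
Lemma scaleKC (k : K) (c : C) (m : M) : (k *: c) *: m = (k%:A : C) *: (c *: m).
Proof. by rewrite scalerA mulr_algl. Qed.
Lemma bil_b1 i v u j : bilin (b1 i v u j : E -> A -> MK).
Proof. split.
- move=> k y1 y2 a; rewrite /b1 epslin restrK_scaleE; modringV M.
- move=> k y a1 a2; rewrite /b1 xlin restrK_scaleE; modringV M.
Qed.
Lemma bil_b2 u j i v : bilin (b2 u j i v : A -> E -> MK).
Proof. split.
- move=> k a1 a2 y; rewrite /b2 xlin restrK_scaleE; modringV M.
- move=> k a y1 y2; rewrite /b2 epslin restrK_scaleE; modringV M.
Qed.

Lemma teqM (U V : lmodType K) (s t : seq (U * V)) (b : U -> V -> MK) :
  teq2 s t -> bilin b -> \sum_(p <- s) (b p.1 p.2 : M) = \sum_(p <- t) (b p.1 p.2 : M).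
Proof. move=> H Hb; exact: (H MK b Hb). Qed.

Definition Br e f i j u v : M :=
  \sum_(p <- dbl e f) (b1 i v u j p.1 p.2 : M) + \sum_(p <- dbr e f) (b2 u j i v p.1 p.2 : M).

Lemma sum_tscaleM (U V : lmodType K) (b : U -> V -> MK) k (s : seq (U * V)) : bilin b ->
  \sum_(p <- tscale k s) (b p.1 p.2 : M) = (k%:A : C) *: \sum_(p <- s) (b p.1 p.2 : M).
Proof. move=> Hb; exact: (sum_tscale Hb). Qed.

Lemma Br_linr (k : K) e f1 f2 i j u v :
  Br e (k *: f1 + f2) i j u v = k%:A *: Br e f1 i j u v + Br e f2 i j u v.
Proof. rewrite /Br (teqM (dcd_brl_lin_r HDCD k e f1 f2) (bil_b1 i v u j)).
rewrite (teqM (dcd_brr_lin_r HDCD k e f1 f2) (bil_b2 u j i v)) !big_cat /=.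
rewrite (sum_tscaleM _ _ (bil_b1 i v u j)) (sum_tscaleM _ _ (bil_b2 u j i v)); modringV M. Qed.
Lemma Br_linl (k : K) e1 e2 f i j u v :
  Br (k *: e1 + e2) f i j u v = k%:A *: Br e1 f i j u v + Br e2 f i j u v.
Proof. rewrite /Br (teqM (dcd_brl_lin_l HDCD k e1 e2 f) (bil_b1 i v u j)).
rewrite (teqM (dcd_brr_lin_l HDCD k e1 e2 f) (bil_b2 u j i v)) !big_cat /=.
rewrite (sum_tscaleM _ _ (bil_b1 i v u j)) (sum_tscaleM _ _ (bil_b2 u j i v)); modringV M. Qed.

Lemma sumH1 (T : Type) (s : seq T) (c : T -> C) (g : T -> I -> C) (m : T -> I -> M) :
  \sum_(p <- s) c p *: \sum_(t < N) g p t *: m p t = \sum_(t < N) \sum_(p <- s) (c p * g p t) *: m p t.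
Proof. rewrite exchange_big /=; apply: eq_bigr => p _; rewrite scaler_sumr; apply: eq_bigr => t _.
by rewrite scalerA. Qed.
Lemma sumH1' (T : Type) (s : seq T) (g : T -> I -> C) (m : T -> M) :
  \sum_(p <- s) (\sum_(t < N) g p t) *: m p = \sum_(t < N) \sum_(p <- s) g p t *: m p.
Proof. rewrite exchange_big /=; apply: eq_bigr => p _; by rewrite scaler_suml. Qed.
Lemma sumH2 (T : Type) (s : seq T) (c : I -> C) (F : T -> I -> M) :
  \sum_(t < N) c t *: \sum_(p <- s) F p t = \sum_(t < N) \sum_(p <- s) c t *: F p t.
Proof. by apply: eq_bigr => t _; rewrite scaler_sumr. Qed.

Lemma Br_la_r e a f i j u v : Br e (la a f) i j u v =
  \sum_(t < N) (x a u t *: Br e f i j t v + X e i j (x a u t) *: eps f t v).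
Proof.
rewrite /Br (teqM (dcd_ax5_EA HDCD e f a) (bil_b1 i v u j)).
rewrite (teqM (dcd_ax5_AE HDCD e f a) (bil_b2 u j i v)) big_cat !big_map /=.
rewrite big_split /=.
under [X in _ = X + _]eq_bigr do rewrite scalerDr.
rewrite big_split /= !sumH2.
under [X in _ = _ + X]eq_bigr do rewrite X_gen /P scaler_suml.
have E1 : \sum_(p <- dbl e f) (b1 i v u j (la a p.1) p.2 : M) =
   \sum_(t < N) \sum_(p <- dbl e f) x a u t *: (b1 i v t j p.1 p.2 : M).
  rewrite /b1; under eq_bigr do rewrite eps_la.
  rewrite sumH1; apply: eq_bigr => t _; apply: eq_bigr => p _; modringV M.
have E2 : \sum_(p <- dbr e f) (b2 u j i v (a * p.1) p.2 : M) =
   \sum_(t < N) \sum_(p <- dbr e f) x a u t *: (b2 t j i v p.1 p.2 : M).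
  rewrite /b2; under eq_bigr do rewrite xM scaler_suml.
  rewrite exchange_big /=; apply: eq_bigr => t _; apply: eq_bigr => p _; modringV M.
have E3 : \sum_(p <- dp e (d a)) (b2 u j i v p.1 (la p.2 f) : M) =
   \sum_(p <- dp e (d a)) \sum_(t < N) (x p.1 u j * x p.2 i t) *: eps f t v.
  rewrite /b2; apply: eq_bigr => p _; rewrite eps_la scaler_sumr; apply: eq_bigr => t _; modringV M.
rewrite E1 E2 E3 -addrA; congr (_ + _); congr (_ + _); by rewrite exchange_big.
Qed.

Lemma Br_ra_r e f a i j u v : Br e (ra f a) i j u v =
  \sum_(t < N) (x a t v *: Br e f i j u t + X e i j (x a t v) *: eps f u t).
Proof.
rewrite /Br (teqM (dcd_ax4_EA HDCD e f a) (bil_b1 i v u j)).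
rewrite (teqM (dcd_ax4_AE HDCD e f a) (bil_b2 u j i v)) big_cat !big_map /=.
rewrite big_split /=.
under [X in _ = X + _]eq_bigr do rewrite scalerDr.
rewrite big_split /= !sumH2.
under [X in _ = _ + X]eq_bigr do rewrite X_gen /P scaler_suml.
have E1 : \sum_(p <- dbl e f) (b1 i v u j p.1 (p.2 * a) : M) =
   \sum_(t < N) \sum_(p <- dbl e f) x a t v *: (b1 i t u j p.1 p.2 : M).
  rewrite /b1; under eq_bigr do rewrite xM scaler_suml.
  rewrite exchange_big /=; apply: eq_bigr => t _; apply: eq_bigr => p _; modringV M.
have E2 : \sum_(p <- dbr e f) (b2 u j i v p.1 (ra p.2 a) : M) =
   \sum_(t < N) \sum_(p <- dbr e f) x a t v *: (b2 u j i t p.1 p.2 : M).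
  rewrite /b2; under eq_bigr do rewrite eps_ra.
  rewrite sumH1; apply: eq_bigr => t _; apply: eq_bigr => p _; modringV M.
have E3 : \sum_(p <- dp e (d a)) (b1 i v u j (ra f p.1) p.2 : M) =
   \sum_(t < N) \sum_(p <- dp e (d a)) (x p.1 t j * x p.2 i v) *: eps f u t.
  rewrite /b1; under eq_bigr do rewrite eps_ra.
  rewrite sumH1; apply: eq_bigr => t _; apply: eq_bigr => p _; modringV M.
rewrite E1 E2 E3; modringV M.
Qed.

Lemma BL_ex e i j : exists B : M -> M,
  (forall c m m', B (c *: m + m') = c *: B m + Phi1 e i j c m + B m') /\
  forall f u v, B (eps f u v) = Br e f i j u v.
Proof. apply: tw_ex.
- by move=> k f1 f2 u v /=; rewrite Br_linr X_K scale0r addr0.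
- by move=> a f u v /=; rewrite Br_la_r.
- by move=> a f u v /=; rewrite Br_ra_r.
Qed.
Definition BL e i j := proj1_sig (constructive_indefinite_description _ (BL_ex e i j)).
Lemma BL_tw e i j c m m' : BL e i j (c *: m + m') = c *: BL e i j m + X e i j c *: m + BL e i j m'.
Proof. by case: (proj2_sig (constructive_indefinite_description _ (BL_ex e i j))) => H _; apply: H. Qed.
Lemma BL_gen e i j f u v : BL e i j (eps f u v) = Br e f i j u v.
Proof. by case: (proj2_sig (constructive_indefinite_description _ (BL_ex e i j))) => _ H; apply: H. Qed.

Lemma solveL (V : zmodType) (a b c : V) : a = b + c -> b = a - c.
Proof. by move=> ->; rewrite addrK. Qed.

Section BilComb.
Variables (U U' V V' W : lmodType K) (b : U -> V -> W) (Hb : bilin b).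
Lemma bil_compl (f : U' -> U) : (forall k a a', f (k *: a + a') = k *: f a + f a') ->
  bilin (fun a v => b (f a) v).
Proof. move=> Hf; case: Hb => H1 H2; split; last by move=> *; apply: H2.
by move=> k a a' v; rewrite Hf H1. Qed.
Lemma bil_compr (f : V' -> V) : (forall k a a', f (k *: a + a') = k *: f a + f a') ->
  bilin (fun u a => b u (f a)).
Proof. move=> Hf; case: Hb => H1 H2; split; first by move=> *; apply: H1.
by move=> k u a a'; rewrite Hf H2. Qed.
Lemma bil_flip : bilin (fun v u => b u v).
Proof. by case: Hb => H1 H2; split => *; [apply: H2 | apply: H1]. Qed.
End BilComb.

Lemma la_lin a : forall k e e', la a (k *: e + e') = k *: la a e + la a e'.
Proof. by have [[_ H] _] := dcd_bimodule HDCD; move=> k e e'; apply: H. Qed.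
Lemma la_linl e : forall k a a', la (k *: a + a') e = k *: la a e + la a' e.
Proof. by have [[H _] _] := dcd_bimodule HDCD; move=> k a a'; apply: H. Qed.
Lemma ra_lin a : forall k e e', ra (k *: e + e') a = k *: ra e a + ra e' a.
Proof. by have [_ [[H _] _]] := dcd_bimodule HDCD; move=> k e e'; apply: H. Qed.
Lemma ra_linr e : forall k a a', ra e (k *: a + a') = k *: ra e a + ra e a'.
Proof. by have [_ [[_ H] _]] := dcd_bimodule HDCD; move=> k a a'; apply: H. Qed.
Lemma mull_lin (a : A) : forall k b b', a * (k *: b + b') = k *: (a * b) + a * b'.
Proof. by move=> k b b'; rewrite mulrDr scalerAr. Qed.
Lemma mulr_lin (a : A) : forall k b b', (k *: b + b') * a = k *: (b * a) + b' * a.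
Proof. by move=> k b b'; rewrite mulrDl scalerAl. Qed.
Lemma laD a e e' : la a (e + e') = la a e + la a e'.
Proof. by have := la_lin a 1 e e'; rewrite !scale1r. Qed.
Lemma raD a e e' : ra (e + e') a = ra e a + ra e' a.
Proof. by have := ra_lin a 1 e e'; rewrite !scale1r. Qed.

Lemma sum_tswapM (U V : lmodType K) (b : U -> V -> MK) (s : seq (V * U)) :
  \sum_(p <- tswap s) (b p.1 p.2 : M) = \sum_(p <- s) (b p.2 p.1 : M).
Proof. by rewrite /tswap big_map. Qed.

Lemma Br_la_l e a f i j u v : Br (la a e) f i j u v =
  \sum_(t < N) (x a i t *: Br e f t j u v - P f (d a) u v i t *: eps e t j + P e f t j u v *: eps (d a) i t).
Proof.
have Bb1 := bil_b1 i v u j; have Bb2 := bil_b2 u j i v.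
have HA1 := teqM (dcd_ax1_EA HDCD (la a e) f) Bb1.
rewrite big_map big_cat /tswap big_map /= in HA1.
have HA2 := teqM (dcd_pair_inn_l HDCD f a e) (bil_compl Bb1 dlin).
rewrite big_map /= in HA2.
have HA3 := teqM (dcd_ax5_AE HDCD f e a) (bil_flip Bb1).
rewrite big_cat !big_map /= in HA3.
have HA4 := teqM (dcd_ax1_EA HDCD e f) (bil_compr Bb1 (mull_lin a)).
rewrite big_map big_cat /tswap big_map /= in HA4.
have HD := solveL HA1; rewrite HA2 HA3 HA4 in HD.
have HB1 := teqM (dcd_ax1_AE HDCD (la a e) f) Bb2.
rewrite big_map big_cat /tswap big_map /= in HB1.
have HB2 := teqM (dcd_pair_inn_l HDCD f a e) (bil_compr Bb2 dlin).
rewrite big_map /= in HB2.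
move: HB2; under [X in _ = X -> _]eq_bigr do rewrite dM /b2 epsD scalerDr -/(b2 _ _ _ _ _ _).
rewrite big_split /= => HB2.
have HB3 := teqM (dcd_ax5_EA HDCD f e a) (bil_flip Bb2).
rewrite !big_map /= in HB3.
have HB4 := teqM (dcd_ax1_AE HDCD e f) (bil_compr Bb2 (la_lin a)).
rewrite big_map big_cat /tswap big_map /= in HB4.
have HR := solveL HB1; rewrite HB2 HB3 HB4 in HR.
have E12 : \sum_(p <- dbl e f) b1 i v u j p.1 (a * p.2) + \sum_(p <- dbr e f) b2 u j i v p.1 (la a p.2)
   = \sum_(t < N) x a i t *: Br e f t j u v.
  rewrite /Br /b1 /b2; under eq_bigr do rewrite xM scaler_suml.
  under [X in _ + X = _]eq_bigr do rewrite eps_la.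
  rewrite exchange_big sumH1 -big_split /=; apply: eq_bigr => t _.
  rewrite scalerDr !scaler_sumr; congr (_ + _); apply: eq_bigr => p _; modringV M.
have EQ : \sum_(p <- dp f (d a)) b1 i v u j (la p.2 e) p.1 = \sum_(t < N) P f (d a) u v i t *: eps e t j.
  rewrite /b1 /P; under eq_bigr do rewrite eps_la.
  rewrite sumH1; apply: eq_bigr => t _; rewrite scaler_suml; apply: eq_bigr => p _; by [].
have ER : \sum_(p <- dp e f) b2 u j i v p.1 (ra (d a) p.2) = \sum_(t < N) P e f t j u v *: eps (d a) i t.
  rewrite /b2 /P; under eq_bigr do rewrite eps_ra.
  rewrite sumH1; apply: eq_bigr => t _; rewrite scaler_suml; apply: eq_bigr => p _; by [].
rewrite /Br HD HR !big_split sumrN /= -E12 -EQ -ER; modringV M.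
Qed.


Lemma Br_ra_l e a f i j u v : Br (ra e a) f i j u v =
  \sum_(t < N) (x a t j *: Br e f i t u v - P f (d a) u v t j *: eps e i t + P e f i t u v *: eps (d a) t j).
Proof.
have Bb1 := bil_b1 i v u j; have Bb2 := bil_b2 u j i v.
have HA1 := teqM (dcd_ax1_EA HDCD (ra e a) f) Bb1.
rewrite big_map big_cat /tswap big_map /= in HA1.
have HA2 := teqM (dcd_pair_inn_r HDCD f e a) (bil_compl Bb1 dlin).
rewrite big_map /= in HA2.
move: HA2; under [X in _ = X -> _]eq_bigr do rewrite dM /b1 epsD scalerDr -/(b1 _ _ _ _ _ _).
rewrite big_split /= => HA2.
have HA3 := teqM (dcd_ax4_AE HDCD f e a) (bil_flip Bb1).
rewrite !big_map /= in HA3.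
have HA4 := teqM (dcd_ax1_EA HDCD e f) (bil_compl Bb1 (ra_lin a)).
rewrite big_map big_cat /tswap big_map /= in HA4.
have HD := solveL HA1; rewrite HA2 HA3 HA4 in HD.
have HB1 := teqM (dcd_ax1_AE HDCD (ra e a) f) Bb2.
rewrite big_map big_cat /tswap big_map /= in HB1.
have HB2 := teqM (dcd_pair_inn_r HDCD f e a) (bil_compr Bb2 dlin).
rewrite big_map /= in HB2.
have HB3 := teqM (dcd_ax4_EA HDCD f e a) (bil_flip Bb2).
rewrite big_cat !big_map /= in HB3.
have HB4 := teqM (dcd_ax1_AE HDCD e f) (bil_compl Bb2 (mulr_lin a)).
rewrite big_map big_cat /tswap big_map /= in HB4.
have HR := solveL HB1; rewrite HB2 HB3 HB4 in HR.
have E12 : \sum_(p <- dbl e f) b1 i v u j (ra p.1 a) p.2 + \sum_(p <- dbr e f) b2 u j i v (p.1 * a) p.2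
   = \sum_(t < N) x a t j *: Br e f i t u v.
  rewrite /Br /b1 /b2; under eq_bigr do rewrite eps_ra.
  under [X in _ + X = _]eq_bigr do rewrite xM scaler_suml.
  rewrite sumH1 [X in _ + X]exchange_big -big_split /=; apply: eq_bigr => t _.
  rewrite scalerDr !scaler_sumr; congr (_ + _); apply: eq_bigr => p _; modringV M.
have EQ : \sum_(p <- dp f (d a)) b2 u j i v p.2 (ra e p.1) = \sum_(t < N) P f (d a) u v t j *: eps e i t.
  rewrite /b2 /P; under eq_bigr do rewrite eps_ra.
  rewrite sumH1; apply: eq_bigr => t _; rewrite scaler_suml; apply: eq_bigr => p _; modringV M.
have ER : \sum_(p <- dp e f) b1 i v u j (la p.1 (d a)) p.2 = \sum_(t < N) P e f i t u v *: eps (d a) t j.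
  rewrite /b1 /P; under eq_bigr do rewrite eps_la.
  rewrite sumH1; apply: eq_bigr => t _; rewrite scaler_suml; apply: eq_bigr => p _; modringV M.
rewrite /Br HD HR !big_split sumrN /= -E12 -EQ -ER; modringV M.
Qed.

Definition Phi2 (n : M) : cocycle M M.
Proof. refine (@Cocycle K C M M (fun c m => - pair n (dN c) *: m + pair m n *: dN c) _ _ _).
- by move=> c c' m; rewrite dND pairDr scalerDr; modring.
- by move=> c m m'; rewrite pairDl scalerDr; modring.
- by move=> c c' m; rewrite dNM pairDr !pairZr pairZl; modring.
Defined.

Lemma X_linl (k : K) e1 e2 i j c : X (k *: e1 + e2) i j c = k%:A * X e1 i j c + X e2 i j c.
Proof. by rewrite /X epslin pair_linl. Qed.
Lemma X_la e a i j c : X (la a e) i j c = \sum_(t < N) x a i t * X e t j c.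
Proof. by rewrite /X eps_la pairsuml; apply: eq_bigr => t _; rewrite pairZl. Qed.
Lemma X_ra e a i j c : X (ra e a) i j c = \sum_(t < N) x a t j * X e i t c.
Proof. by rewrite /X eps_ra pairsuml; apply: eq_bigr => t _; rewrite pairZl. Qed.

Lemma BR_ex (n : M) : exists B : M -> M,
  (forall c m m', B (c *: m + m') = c *: B m + Phi2 n c m + B m') /\
  forall e i j, B (eps e i j) = BL e i j n.
Proof. apply: tw_ex => /=.
- move=> k e1 e2 i j; rewrite dNK pair0r oppr0 scale0r scaler0 !addr0.
  move: n; apply: (@tw_uniq M (fun c n => X (k *: e1 + e2) i j c *: n) (BL (k *: e1 + e2) i j)
     (fun n => k%:A *: BL e1 i j n + BL e2 i j n)).
  + by move=> c m m'; rewrite BL_tw.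
  + move=> c m m'; rewrite !BL_tw X_linl; modring.
  + by move=> f u v; rewrite !BL_gen Br_linl.
- move=> a e i j.
  move: n; apply: (@tw_uniq M (fun c n => X (la a e) i j c *: n) (BL (la a e) i j)
     (fun n => \sum_(t < N) (x a i t *: BL e t j n + (- pair n (dN (x a i t)) *: eps e t j + pair (eps e t j) n *: dN (x a i t))))).
  + by move=> c m m'; rewrite BL_tw.
  + move=> c m m'; rewrite X_la scaler_suml scaler_sumr -!big_split; apply: eq_bigr => t _ /=.
    rewrite BL_tw pair_linl pairDr pairZr; modring.
  + move=> f u v; rewrite BL_gen Br_la_l; apply: eq_bigr => t _.
    rewrite BL_gen dN_gen !pair_gen. modring.
- move=> a e i j.
  move: n; apply: (@tw_uniq M (fun c n => X (ra e a) i j c *: n) (BL (ra e a) i j)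
     (fun n => \sum_(t < N) (x a t j *: BL e i t n + (- pair n (dN (x a t j)) *: eps e i t + pair (eps e i t) n *: dN (x a t j))))).
  + by move=> c m m'; rewrite BL_tw.
  + move=> c m m'; rewrite X_ra scaler_suml scaler_sumr -!big_split; apply: eq_bigr => t _ /=.
    rewrite BL_tw pair_linl pairDr pairZr; modring.
  + move=> f u v; rewrite BL_gen Br_ra_l; apply: eq_bigr => t _.
    rewrite BL_gen dN_gen !pair_gen; modring.
Qed.

Definition BR n := proj1_sig (constructive_indefinite_description _ (BR_ex n)).
Definition br (m n : M) : M := BR n m.
Lemma br_tw_l c m m' n : br (c *: m + m') n =
  c *: br m n - pair n (dN c) *: m + pair m n *: dN c + br m' n.
Proof. case: (proj2_sig (constructive_indefinite_description _ (BR_ex n))) => H _.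
rewrite /br /BR H /=; modring. Qed.
Lemma br_genl e i j n : br (eps e i j) n = BL e i j n.
Proof. by case: (proj2_sig (constructive_indefinite_description _ (BR_ex n))) => _ H; apply: H. Qed.
Lemma br_gen e i j f u v : br (eps e i j) (eps f u v) = Br e f i j u v.
Proof. by rewrite br_genl BL_gen. Qed.

Lemma br_tw_r m c n n' : br m (c *: n + n') = c *: br m n + pair m (dN c) *: n + br m n'.
Proof. move: m.
apply: (@tw_uniq M (fun c' m => - pair (c *: n + n') (dN c') *: m + pair m (c *: n + n') *: dN c')
   (fun m => br m (c *: n + n')) (fun m => c *: br m n + pair m (dN c) *: n + br m n')).
- by move=> c' m m'; rewrite br_tw_l; modring.
- move=> c' m m'; rewrite !br_tw_l pair_linl !pair_linl pair_linr; modring.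
- by move=> e i j; rewrite !br_genl BL_tw.
Qed.

Lemma brDl m m' n : br (m + m') n = br m n + br m' n.
Proof. have H1 : dN 1 = 0 by exact: (der1 dN_der).
by rewrite -{1}(scale1r m) br_tw_l H1 pair0r scale0r scaler0 subr0 addr0 scale1r. Qed.

Lemma dN1 : dN 1 = 0.
Proof. exact: (der1 dN_der). Qed.
Lemma dN0 : dN 0 = 0.
Proof. exact: (der0 dN_der). Qed.
Lemma dNsum (T : Type) (s : seq T) (F : T -> C) : dN (\sum_(p <- s) F p) = \sum_(p <- s) dN (F p).
Proof. exact: (dersum dN_der). Qed.
Lemma brDr m n n' : br m (n + n') = br m n + br m n'.
Proof. by rewrite -{1}(scale1r n) br_tw_r dN1 pair0r scale0r addr0 scale1r. Qed.
Lemma br0l n : br 0 n = 0.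
Proof. apply: dbl0; by rewrite -brDl addr0. Qed.
Lemma br0r m : br m 0 = 0.
Proof. apply: dbl0; by rewrite -brDr addr0. Qed.
Lemma brZl c m n : br (c *: m) n = c *: br m n - pair n (dN c) *: m + pair m n *: dN c.
Proof. by rewrite -(addr0 (c *: m)) br_tw_l br0l addr0. Qed.
Lemma brZr c m n : br m (c *: n) = c *: br m n + pair m (dN c) *: n.
Proof. by rewrite -(addr0 (c *: n)) br_tw_r br0r addr0. Qed.
Lemma brNl m n : br (- m) n = - br m n.
Proof. apply/eqP; rewrite -addr_eq0 -brDl addrC subrr br0l //. Qed.
Lemma brNr m n : br m (- n) = - br m n.
Proof. apply/eqP; rewrite -addr_eq0 -brDr addrC subrr br0r //. Qed.
Lemma brsuml (T : Type) (s : seq T) (F : T -> M) n : br (\sum_(p <- s) F p) n = \sum_(p <- s) br (F p) n.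
Proof. elim: s => [|a s IH]; by rewrite ?big_nil ?br0l // !big_cons brDl IH. Qed.
Lemma brsumr (T : Type) (s : seq T) (F : T -> M) m : br m (\sum_(p <- s) F p) = \sum_(p <- s) br m (F p).
Proof. elim: s => [|a s IH]; by rewrite ?big_nil ?br0r // !big_cons brDr IH. Qed.

Lemma teq_nil (U V : lmodType K) (s : seq (U * V)) (b : U -> V -> MK) :
  teq2 s [::] -> bilin b -> \sum_(p <- s) (b p.1 p.2 : M) = 0.
Proof. move=> H Hb; by rewrite (teqM H Hb) big_nil. Qed.
Lemma teq_nilC (U V : lmodType K) (s : seq (U * V)) (b : U -> V -> C) :
  teq2 s [::] -> bilin b -> \sum_(p <- s) b p.1 p.2 = 0.
Proof. move=> H Hb; by rewrite (teqP H Hb) big_nil. Qed.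

Lemma pair_dd_gen a i j c : pair (eps (d a) i j) (dN c) = 0.
Proof. move: c; apply: (@der_uniq C^o (fun c => pair (eps (d a) i j) (dN c))).
- split.
  + by move=> k c c'; rewrite dNlin pair_linr.
  + by move=> c c'; rewrite dNM pairDr !pairZr.
- move=> b u v; rewrite dN_gen pair_gen /P; exact: (teq_nilC (dcd_ax3 HDCD a b) (bil_xx _ _ _ _)).
Qed.
Lemma pair_dd c c' : pair (dN c) (dN c') = 0.
Proof. move: c; apply: (@der_uniq C^o (fun c => pair (dN c) (dN c'))).
- split.
  + by move=> k c c''; rewrite dNlin pair_linl.
  + by move=> c c''; rewrite dNM pairDl !pairZl.
- by move=> a i j; rewrite dN_gen pair_dd_gen.
Qed.

Lemma br_d_gen a i j n : br (eps (d a) i j) n = 0.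
Proof. rewrite br_genl; move: n.
apply: (@lin_uniq M (BL (d a) i j) (fun _ => 0)).
- by move=> c m m'; rewrite BL_tw /X pair_dd_gen scale0r addr0.
- by move=> *; rewrite scaler0 addr0.
- move=> f u v; rewrite BL_gen /Br (teq_nil (dcd_ax2_l HDCD a f) (bil_b1 _ _ _ _)).
  by rewrite (teq_nil (dcd_ax2_r HDCD a f) (bil_b2 _ _ _ _)) addr0.
Qed.
Lemma br_d c n : br (dN c) n = 0.
Proof. move: c; apply: (@der_uniq M (fun c => br (dN c) n)).
- split.
  + by move=> k c c'; rewrite dNlin br_tw_l dNK pair0r scale0r scaler0 subr0 addr0.
  + move=> c c'; rewrite dNM br_tw_l brZl (pair_sym (dN c') n) (pair_sym (dN c) n); modring.
- by move=> a i j; rewrite dN_gen br_d_gen.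
Qed.

Lemma sym_gen e f i j u v : dN (P e f i j u v) = Br e f i j u v + Br f e u v i j.
Proof.
have HA := teqM (dcd_ax1_EA HDCD e f) (bil_b1 i v u j).
rewrite big_map big_cat /tswap big_map /= in HA.
have HB := teqM (dcd_ax1_AE HDCD e f) (bil_b2 u j i v).
rewrite big_map big_cat /tswap big_map /= in HB.
rewrite /P dNsum.
under eq_bigr do rewrite dNM !dN_gen.
rewrite big_split /=.
have -> : \sum_(p <- dp e f) x p.1 u j *: eps (d p.2) i v = \sum_(p <- dp e f) b2 u j i v p.1 (d p.2) by [].
have -> : \sum_(p <- dp e f) x p.2 i v *: eps (d p.1) u j = \sum_(p <- dp e f) b1 i v u j (d p.1) p.2 by [].
rewrite HA HB /Br.
have -> : \sum_(p <- dbr f e) b1 i v u j p.2 p.1 = \sum_(p <- dbr f e) b2 i v u j p.1 p.2 by [].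
have -> : \sum_(p <- dbl f e) b2 u j i v p.2 p.1 = \sum_(p <- dbl f e) b1 u j i v p.1 p.2 by [].
modring.
Qed.
Lemma symmetric n1 n2 : dN (pair n1 n2) = br n1 n2 + br n2 n1.
Proof.
have Hg : forall e i j n, dN (pair (eps e i j) n) = br (eps e i j) n + br n (eps e i j).
  move=> e i j; apply: (@tw_uniq M (fun c n => pair (eps e i j) n *: dN c)).
  - by move=> c m m'; rewrite pair_linr dND dNM.
  - move=> c m m'; rewrite br_tw_r br_tw_l (pair_sym m); modring.
  - by move=> f u v; rewrite br_gen br_gen pair_gen sym_gen.
move: n1; apply: (@tw_uniq M (fun c m => pair m n2 *: dN c)).
- by move=> c m m'; rewrite pair_linl dND dNM.
- move=> c m m'; rewrite br_tw_r br_tw_l; modring.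
- by move=> e i j; rewrite Hg.
Qed.

Lemma teqP3 (U V Y : lmodType K) (s t : seq (U * V * Y)) (W : lmodType K) (b : U -> V -> Y -> W) :
  teq3 s t -> trilin b -> \sum_(p <- s) b p.1.1 p.1.2 p.2 = \sum_(p <- t) b p.1.1 p.1.2 p.2.
Proof. by move=> H Hb; apply: H. Qed.

Lemma tril_xxx a1 b1 a2 b2 a3 b3 :
  trilin (fun al be ga : A => x al a1 b1 * x be a2 b2 * x ga a3 b3 : C).
Proof. split; [|split].
- by move=> k u1 u2 v w; rewrite xlin !mulrDl !scalerAl.
- by move=> k u v1 v2 w; rewrite xlin mulrDr mulrDl scalerAl scalerAr.
- by move=> k u v w1 w2; rewrite xlin mulrDr scalerAr.
Qed.

Lemma sum_flat_map (T T' R : Type) (W : zmodType) (s : seq T) (g : T -> seq T') (h : T -> T' -> R) (F : R -> W) :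
  \sum_(r <- flatten [seq [seq h p q | q <- g p] | p <- s]) F r = \sum_(p <- s) \sum_(q <- g p) F (h p q).
Proof. rewrite big_flatten big_map; apply: eq_bigr => p _; by rewrite big_map. Qed.

Lemma inv_gen e i j f u v g s t :
  pair (eps e i j) (dN (pair (eps f u v) (eps g s t))) =
  pair (br (eps e i j) (eps f u v)) (eps g s t) + pair (eps f u v) (br (eps e i j) (eps g s t)).
Proof.
rewrite !br_gen pair_gen /P dNsum pairsumr.
under eq_bigr do rewrite dNM !dN_gen pairDr !pairZr !pair_gen.
rewrite big_split /=.
rewrite /Br pairDl pairDr !pairsuml !pairsumr /b1 /b2.
under [X in _ = X + _ + _]eq_bigr do rewrite pairZl pair_gen.
under [X in _ = _ + X + _]eq_bigr do rewrite pairZl pair_gen.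
under [X in _ = _ + (X + _)]eq_bigr do rewrite pairZr pair_gen.
under [X in _ = _ + (_ + X)]eq_bigr do rewrite pairZr pair_gen.
have H7 := teqP3 (dcd_ax7 HDCD e f g) (tril_xxx s j i v u t).
rewrite !big_cat !sum_flat_map /= in H7.
have H7' := teqP3 (dcd_ax7 HDCD e g f) (tril_xxx u j i t s v).
rewrite !big_cat !sum_flat_map /= in H7'.
have HL1 : \sum_(p <- dp f g) x p.1 s v * P e (d p.2) i j u t =
           \sum_(p <- dp g f) \sum_(q <- dp e (d p.1)) x q.1 u j * x q.2 i t * x p.2 s v.
  have Hb : bilin (fun al be : A => x al s v * P e (d be) i j u t : C).
    split.
    - by move=> k a1 a2 b; rewrite xlin mulrDl scalerAl.
    - by move=> k a b1 b2; rewrite dlin P_linr -[k *: (_ * _)]mulr_algl; ring.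
  rewrite (teqP (dcd_pair_sym HDCD f g) Hb) /tswap big_map /=.
  apply: eq_bigr => p _; rewrite /P mulr_sumr; apply: eq_bigr => q _ /=; ring.
have HL2 : \sum_(p <- dp f g) x p.2 u t * P e (d p.1) i j s v =
           \sum_(p <- dp f g) \sum_(q <- dp e (d p.1)) x q.1 s j * x q.2 i v * x p.2 u t.
  apply: eq_bigr => p _; rewrite /P mulr_sumr; apply: eq_bigr => q _ /=; ring.
rewrite HL1 HL2 H7 H7'.
have R1 : \sum_(p <- dbl e f) x p.2 i v * P p.1 g u j s t =
          \sum_(p <- dbl e f) \sum_(q <- dp p.1 g) x q.1 s j * x p.2 i v * x q.2 u t.
  apply: eq_bigr => p _; rewrite /P mulr_sumr; apply: eq_bigr => q _ /=; ring.
have R2 : \sum_(p <- dbr e f) x p.1 u j * P p.2 g i v s t =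
          \sum_(p <- dbr e f) \sum_(q <- dp g p.2) x p.1 u j * x q.1 i t * x q.2 s v.
  apply: eq_bigr => p _; rewrite P_sym /P mulr_sumr; apply: eq_bigr => q _ /=; ring.
have R3 : \sum_(p <- dbl e g) x p.2 i t * P f p.1 u v s j =
          \sum_(p <- dbl e g) \sum_(q <- dp p.1 f) x q.1 u j * x p.2 i t * x q.2 s v.
  apply: eq_bigr => p _; rewrite P_sym /P mulr_sumr; apply: eq_bigr => q _ /=; ring.
have R4 : \sum_(p <- dbr e g) x p.1 s j * P f p.2 u v i t =
          \sum_(p <- dbr e g) \sum_(q <- dp f p.2) x p.1 s j * x q.1 i v * x q.2 u t.
  apply: eq_bigr => p _; rewrite /P mulr_sumr; apply: eq_bigr => q _ /=; ring.
rewrite R1 R2 R3 R4; ring.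
Qed.

Lemma invariance n1 n2 n3 :
  pair n1 (dN (pair n2 n3)) = pair (br n1 n2) n3 + pair n2 (br n1 n3).
Proof.
have R3 : forall n1 n2, (forall g s t, pair n1 (dN (pair n2 (eps g s t))) =
      pair (br n1 n2) (eps g s t) + pair n2 (br n1 (eps g s t))) ->
    forall n3, pair n1 (dN (pair n2 n3)) = pair (br n1 n2) n3 + pair n2 (br n1 n3).
  move=> m1 m2 H; apply: (@tw_uniq C^o (fun c n => pair m2 n * pair m1 (dN c))
     (fun n => pair m1 (dN (pair m2 n))) (fun n => pair (br m1 m2) n + pair m2 (br m1 n))).
  - move=> c m m'; rewrite pair_linr dND dNM !pairDr !pairZr.
    rewrite /GRing.scale /=; ring.
  - move=> c m m'; rewrite br_tw_r !pairDr !pairZr.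
    rewrite /GRing.scale /=; ring.
  - exact: H.
have R2 : forall n1 g s t, (forall f u v, pair n1 (dN (pair (eps f u v) (eps g s t))) =
      pair (br n1 (eps f u v)) (eps g s t) + pair (eps f u v) (br n1 (eps g s t))) ->
    forall n2, pair n1 (dN (pair n2 (eps g s t))) =
      pair (br n1 n2) (eps g s t) + pair n2 (br n1 (eps g s t)).
  move=> m1 g s t H; apply: (@tw_uniq C^o (fun c n => pair n (eps g s t) * pair m1 (dN c))
     (fun n => pair m1 (dN (pair n (eps g s t)))) (fun n => pair (br m1 n) (eps g s t) + pair n (br m1 (eps g s t)))).
  - move=> c m m'; rewrite pair_linl dND dNM !pairDr !pairZr.
    rewrite /GRing.scale /=; ring.
  - move=> c m m'; rewrite br_tw_r !pairDl !pairZl.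
    rewrite /GRing.scale /=; ring.
  - exact: H.
have R1 : forall f u v g s t, forall n1, pair n1 (dN (pair (eps f u v) (eps g s t))) =
      pair (br n1 (eps f u v)) (eps g s t) + pair (eps f u v) (br n1 (eps g s t)).
  move=> f u v g s t; apply: (@tw_uniq C^o (fun _ _ => 0)
     (fun n => pair n (dN (pair (eps f u v) (eps g s t))))
     (fun n => pair (br n (eps f u v)) (eps g s t) + pair (eps f u v) (br n (eps g s t)))).
  - by move=> c m m'; rewrite pair_linl addr0.
  - move=> c m m'; rewrite !br_tw_l !pairDl !pairDr !pairNr !pairNl !pairZr !pairZl.
    rewrite (pair_sym (dN c) (eps g s t)) (pair_sym (eps f u v) m).
    rewrite /GRing.scale /=; ring.
  - by move=> e i j; rewrite inv_gen.
apply: R3 => g s t; apply: R2 => f u v; exact: R1.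
Qed.

Section JacGen.
Variables (e f g : E) (i j u v s t : I).

Definition phiE (al : E) (be ga : A) : MK := (x be i v * x ga u t) *: eps al s j.
Definition phiA (al : A) (be : E) (ga : A) : MK := (x al s j * x ga u t) *: eps be i v.
Definition phiR (al be : A) (ga : E) : MK := (x al s j * x be i v) *: eps ga u t.

Lemma tril_phiE : trilin phiE.
Proof. split; [|split] => *; rewrite /phiE ?xlin ?epslin restrK_scaleE; modringV M. Qed.
Lemma tril_phiA : trilin phiA.
Proof. split; [|split] => *; rewrite /phiA ?xlin ?epslin restrK_scaleE; modringV M. Qed.
Lemma tril_phiR : trilin phiR.
Proof. split; [|split] => *; rewrite /phiR ?xlin ?epslin restrK_scaleE; modringV M. Qed.
End JacGen.

Lemma teqM3 (U V Y : lmodType K) (s t : seq (U * V * Y)) (b : U -> V -> Y -> MK) :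
  teq3 s t -> trilin b -> \sum_(p <- s) (b p.1.1 p.1.2 p.2 : M) = \sum_(p <- t) (b p.1.1 p.1.2 p.2 : M).
Proof. move=> H Hb; exact: (H MK b Hb). Qed.

Section JacPieces.
Variables (e f g : E) (i j u v s t : I).
Definition EL : M := \sum_(p <- dbl f g) \sum_(q <- dbl e p.1) (x q.2 i v * x p.2 u t) *: eps q.1 s j.
Definition AL : M := \sum_(p <- dbl f g) \sum_(q <- dbr e p.1) (x q.1 s j * x p.2 u t) *: eps q.2 i v.
Definition RL : M := \sum_(p <- dbr f g) \sum_(q <- dp e (d p.1)) (x q.1 s j * x q.2 i v) *: eps p.2 u t.
Definition ER1 : M := \sum_(p <- dbl e g) \sum_(q <- dp f (d p.2)) (x q.1 i v * x q.2 u t) *: eps p.1 s j.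
Definition ER2 : M := \sum_(p <- dbl e f) \sum_(q <- dbl p.1 g) (x p.2 i v * x q.2 u t) *: eps q.1 s j.
Definition AR1 : M := \sum_(p <- dbr e g) \sum_(q <- dbl f p.2) (x p.1 s j * x q.2 u t) *: eps q.1 i v.
Definition AR2 : M := \sum_(p <- dbl e f) \sum_(q <- dp p.1 g) (x q.1 s j * x q.2 u t) *: eps (d p.2) i v.
Definition AR3 : M := \sum_(p <- dbr e f) \sum_(q <- dp (d p.1) g) (x (- q.1) s j * x q.2 u t) *: eps p.2 i v.
Definition RR1 : M := \sum_(p <- dbr e g) \sum_(q <- dbr f p.2) (x p.1 s j * x q.1 i v) *: eps q.2 u t.
Definition RR2 : M := \sum_(p <- dbl e f) \sum_(q <- dbr p.1 g) (x q.1 s j * x p.2 i v) *: eps q.2 u t.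

Lemma ax6E : EL = ER1 + ER2.
Proof. have H := teqM3 (dcd_ax6_EAA HDCD e f g) (tril_phiE i j u v s t).
by rewrite !big_cat !sum_flat_map /= in H. Qed.
Lemma ax6A : AL = AR1 + AR2 + AR3.
Proof. have H := teqM3 (dcd_ax6_AEA HDCD e f g) (tril_phiA i j u v s t).
by rewrite !big_cat !sum_flat_map /= addrA in H. Qed.
Lemma ax6R : RL = RR1 + RR2.
Proof. have H := teqM3 (dcd_ax6_AAE HDCD e f g) (tril_phiR i j u v s t).
by rewrite !big_cat !sum_flat_map /= in H. Qed.

Definition T1 : M :=
  \sum_(p <- dbl f g) (x p.2 u t *: Br e p.1 i j s v + P e (d p.2) i j u t *: eps p.1 s v) +
  \sum_(p <- dbr f g) (x p.1 s v *: Br e p.2 i j u t + P e (d p.1) i j s v *: eps p.2 u t).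
Definition T2 : M :=
  \sum_(p <- dbl e f) (x p.2 i v *: Br p.1 g u j s t - P g (d p.2) s t i v *: eps p.1 u j
                        + P p.1 g u j s t *: eps (d p.2) i v) +
  \sum_(p <- dbr e f) (x p.1 u j *: Br p.2 g i v s t - P g (d p.1) s t u j *: eps p.2 i v
                        + P p.2 g i v s t *: eps (d p.1) u j).
Definition T2Z : M :=
  - \sum_(p <- dbl e f) P g (d p.2) s t i v *: eps p.1 u j +
  \sum_(p <- dbr e f) (x p.1 u j *: Br p.2 g i v s t + P p.2 g i v s t *: eps (d p.1) u j).
End JacPieces.

Lemma T1_dec e f g i j u v s t : T1 e f g i j u v s t =
  EL e f g i j u v s t + AL e f g i j u v s t + RL e f g i j u v s t +
  ER1 f e g u v i j s t + AR1 f e g u v i j s t + RR1 f e g u v i j s t.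
Proof.
rewrite /T1 !big_split /=.
have H1 : \sum_(p <- dbl f g) x p.2 u t *: Br e p.1 i j s v = EL e f g i j u v s t + AL e f g i j u v s t.
  rewrite /EL /AL -big_split; apply: eq_bigr => p _ /=; rewrite /Br scalerDr !scaler_sumr.
  congr (_ + _); apply: eq_bigr => q _; rewrite /b1 /b2; modringV M.
have H2 : \sum_(p <- dbl f g) P e (d p.2) i j u t *: eps p.1 s v = ER1 f e g u v i j s t.
  by rewrite /ER1; apply: eq_bigr => p _; rewrite /P scaler_suml.
have H3 : \sum_(p <- dbr f g) x p.1 s v *: Br e p.2 i j u t = AR1 f e g u v i j s t + RR1 f e g u v i j s t.
  rewrite /AR1 /RR1 -big_split; apply: eq_bigr => p _ /=; rewrite /Br scalerDr !scaler_sumr.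
  congr (_ + _); apply: eq_bigr => q _; rewrite /b1 /b2; modringV M.
have H4 : \sum_(p <- dbr f g) P e (d p.1) i j s v *: eps p.2 u t = RL e f g i j u v s t.
  by rewrite /RL; apply: eq_bigr => p _; rewrite /P scaler_suml.
rewrite H1 H2 H3 H4; modringV M.
Qed.

Lemma T2_dec e f g i j u v s t : T2 e f g i j u v s t =
  ER2 e f g i j u v s t + RR2 e f g i j u v s t + AR2 e f g i j u v s t + AR3 e f g i j u v s t +
  T2Z e f g i j u v s t.
Proof.
rewrite /T2 /T2Z !big_split /= !sumrN.
have H1 : \sum_(p <- dbl e f) x p.2 i v *: Br p.1 g u j s t = ER2 e f g i j u v s t + RR2 e f g i j u v s t.
  rewrite /ER2 /RR2 -big_split; apply: eq_bigr => p _ /=; rewrite /Br scalerDr !scaler_sumr.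
  congr (_ + _); apply: eq_bigr => q _; rewrite /b1 /b2; modringV M.
have H2 : \sum_(p <- dbl e f) P p.1 g u j s t *: eps (d p.2) i v = AR2 e f g i j u v s t.
  by rewrite /AR2; apply: eq_bigr => p _; rewrite /P scaler_suml.
have H3 : - \sum_(p <- dbr e f) P g (d p.1) s t u j *: eps p.2 i v = AR3 e f g i j u v s t.
  rewrite /AR3 -sumrN; apply: eq_bigr => p _; rewrite P_sym /P scaler_suml -sumrN.
  apply: eq_bigr => q _; rewrite xN; modringV M.
rewrite H1 H2 -H3; modringV M.
Qed.

Lemma Br_d a f i j u v : Br (d a) f i j u v = 0.
Proof. rewrite /Br (teq_nil (dcd_ax2_l HDCD a f) (bil_b1 _ _ _ _)).
by rewrite (teq_nil (dcd_ax2_r HDCD a f) (bil_b2 _ _ _ _)) addr0. Qed.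

Lemma Z_zero e f g i j u v s t :
  T2Z e f g i j u v s t + T2 f e g u v i j s t - T2Z f e g u v i j s t = 0.
Proof.
pose Q (y : E) (a : A) : MK := x a u j *: Br y g i v s t + P y g i v s t *: eps (d a) u j.
pose S (y : E) (a : A) : MK := P g (d a) s t i v *: eps y u j.
have BQ : bilin Q.
  split.
  - move=> k y1 y2 a; rewrite /Q Br_linl P_linl restrK_scaleE; modringV M.
  - move=> k y a1 a2; rewrite /Q xlin dlin epslin restrK_scaleE; modringV M.
have BS : bilin S.
  split.
  - move=> k y1 y2 a; rewrite /S epslin restrK_scaleE; modringV M.
  - move=> k y a1 a2; rewrite /S dlin P_linr restrK_scaleE; modringV M.
have HQ := teqM (dcd_ax1_EA HDCD f e) BQ.
rewrite big_map big_cat /tswap big_map /= in HQ.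
have HS := teqM (dcd_ax1_EA HDCD e f) BS.
rewrite big_map big_cat /tswap big_map /= in HS.
have BS' : bilin (fun al be : A => S (d al) be).
  split.
  - move=> k a1 a2 b; rewrite /S dlin epslin restrK_scaleE; modringV M.
  - move=> k a b1 b2; rewrite /S dlin P_linr restrK_scaleE; modringV M.
have HS' := teqM (dcd_pair_sym HDCD e f) BS'.
rewrite /tswap big_map /= in HS'.
have HQd : \sum_(p <- dp f e) (Q (d p.1) p.2 : M) = \sum_(p <- dp f e) (S (d p.2) p.1 : M).
  apply: eq_bigr => p _; rewrite /Q /S Br_d P_sym scaler0 add0r; by [].
have EZ : T2Z e f g i j u v s t + T2 f e g u v i j s t - T2Z f e g u v i j s t =
   (\sum_(p <- dbl f e) (Q p.1 p.2 : M) + \sum_(p <- dbr e f) (Q p.2 p.1 : M)) -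
   (\sum_(p <- dbl e f) (S p.1 p.2 : M) + \sum_(p <- dbr f e) (S p.2 p.1 : M)).
  rewrite /T2Z /T2 /Q /S !big_split /= !sumrN; modringV M.
rewrite EZ -HQ -HS HQd -HS'; exact: subrr.
Qed.

Lemma T1_eq e f g i j u v s t :
  br (eps e i j) (br (eps f u v) (eps g s t)) = T1 e f g i j u v s t.
Proof.
rewrite br_gen /Br /T1 brDr !brsumr; congr (_ + _); apply: eq_bigr => p _;
  by rewrite /b1 /b2 brZr br_gen dN_gen pair_gen.
Qed.
Lemma T2_eq e f g i j u v s t :
  br (br (eps e i j) (eps f u v)) (eps g s t) = T2 e f g i j u v s t.
Proof.
rewrite br_gen /Br /T2 brDl !brsuml; congr (_ + _); apply: eq_bigr => p _;
  by rewrite /b1 /b2 brZl br_gen dN_gen !pair_gen.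
Qed.

Lemma jacobi_gen e f g i j u v s t :
  br (eps e i j) (br (eps f u v) (eps g s t)) =
  br (br (eps e i j) (eps f u v)) (eps g s t) + br (eps f u v) (br (eps e i j) (eps g s t)).
Proof.
rewrite T1_eq T2_eq T1_eq T1_dec T1_dec T2_dec.
have HZ := Z_zero e f g i j u v s t.
rewrite T2_dec in HZ.
rewrite ax6E ax6A ax6R (ax6E f e g) (ax6A f e g) (ax6R f e g).
move: HZ; set Z1 := T2Z e f g i j u v s t; set Z2 := T2Z f e g u v i j s t => HZ.
have -> : Z1 = - (ER2 f e g u v i j s t + RR2 f e g u v i j s t + AR2 f e g u v i j s t + AR3 f e g u v i j s t).
  apply/eqP; rewrite -subr_eq0 opprK; apply/eqP; rewrite -HZ; modringV M.
modringV M.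
Qed.

Lemma dNpair_dN n c : dN (pair n (dN c)) = br n (dN c).
Proof. by rewrite symmetric br_d addr0. Qed.
Lemma inv_dN n1 n2 c : pair n1 (br n2 (dN c)) = pair (br n1 n2) (dN c) + pair n2 (br n1 (dN c)).
Proof. by rewrite -dNpair_dN invariance. Qed.

Definition J n1 n2 n3 := br n1 (br n2 n3) - br (br n1 n2) n3 - br n2 (br n1 n3).

Lemma J_lin3 n1 n2 c n3 n3' : J n1 n2 (c *: n3 + n3') = c *: J n1 n2 n3 + J n1 n2 n3'.
Proof.
rewrite /J !br_tw_r !brDr !brZr !dNpair_dN (inv_dN n1 n2 c); modring.
Qed.
Lemma J_lin2 n1 c n2 n2' n3 : J n1 (c *: n2 + n2') n3 = c *: J n1 n2 n3 + J n1 n2' n3.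
Proof.
rewrite /J !br_tw_l br_tw_r !brDr !brDl !brNr !brZr !brZl !dNpair_dN (invariance n1 n2 n3) (inv_dN n1 n3 c).
modring.
Qed.
Lemma J_lin1 c n1 n1' n2 n3 : J (c *: n1 + n1') n2 n3 = c *: J n1 n2 n3 + J n1' n2 n3.
Proof.
rewrite /J !br_tw_l !brDr !brDl !brNr !brNl !brZr !brZl br_d !dNpair_dN (invariance n2 n1 n3).
rewrite (symmetric n1 n2) !pairDr (pair_sym n3 (br n1 n2)) (pair_sym n3 (br n2 n1)) (pair_sym (dN c) n3).
rewrite (inv_dN n2 n3 c); modring.
Qed.

Lemma jacobi n1 n2 n3 : br n1 (br n2 n3) = br (br n1 n2) n3 + br n2 (br n1 n3).
Proof.
suff : J n1 n2 n3 = 0 by rewrite /J => /eqP; rewrite subr_eq0 subr_eq => /eqP ->; rewrite addrC.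
have Hz : lin (fun _ : M => 0 : M) by move=> *; rewrite scaler0 addr0.
have S3 : forall n1 n2, (forall g s t, J n1 n2 (eps g s t) = 0) -> forall n3, J n1 n2 n3 = 0.
  move=> m1 m2 H; apply: (lin_uniq (p2 := fun _ => 0)) => //; first by move=> *; rewrite J_lin3.
have S2 : forall n1 g s t, (forall f u v, J n1 (eps f u v) (eps g s t) = 0) -> forall n2, J n1 n2 (eps g s t) = 0.
  move=> m1 g s t H; apply: (lin_uniq (p1 := fun n => J m1 n (eps g s t)) (p2 := fun _ => 0)) => //.
  by move=> *; rewrite J_lin2.
have S1 : forall f u v g s t n1, J n1 (eps f u v) (eps g s t) = 0.
  move=> f u v g s t; apply: (lin_uniq (p1 := fun n => J n (eps f u v) (eps g s t)) (p2 := fun _ => 0)) => //.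
  - by move=> *; rewrite J_lin1.
  - move=> e i j; rewrite /J jacobi_gen; modring.
apply: S3 => g s t; apply: S2 => f u v; exact: S1.
Qed.

Lemma main_thm :
  exists (dN : C -> M) (pair : M -> M -> C) (br : M -> M -> M),
    [/\ (forall a i j, dN (x a i j) = eps (d a) i j),
        (forall e f i j u v,
           pair (eps e i j) (eps f u v) = \sum_(p <- dp e f) x p.1 u j * x p.2 i v),
        (forall e f i j u v,
           br (eps e i j) (eps f u v) =
             \sum_(p <- dbl e f) x p.2 i v *: eps p.1 u j +
             \sum_(p <- dbr e f) x p.1 u j *: eps p.2 i v) &
        is_CD_algebra pair dN br].
Proof.
exists dN, pair, br; split.
- exact: dN_gen.
- by move=> e f i j u v; rewrite pair_gen.
- by move=> e f i j u v; rewrite br_gen.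
- split.
  + exact: pair_linl.
  + exact: pair_sym.
  + exact: dNlin.
  + exact: dNM.
  + by move=> k m1 m2 n; rewrite br_tw_l dNK pair0r scale0r scaler0 subr0 addr0.
  + by move=> k m n1 n2; rewrite br_tw_r dNK pair0r scale0r addr0.
  + by move=> *; rewrite brZr.
  + exact: invariance.
  + exact: symmetric.
  + exact: jacobi.
  + exact: br_d.
  + exact: pair_dd.
Qed.

End Main.

Theorem theorem7p4 (K : fieldType) (charK0 : [pchar K] =i pred0)
    (A : algType K) (E : lmodType K)
    (la : A -> E -> E) (ra : E -> A -> E) (d : A -> E)
    (dp : E -> E -> seq (A * A)) (dbl : E -> E -> seq (E * A))
    (dbr : E -> E -> seq (A * E))
    (HDCD : is_double_CD_algebra la ra d dp dbl dbr)
    (N : nat) (HN : (0 < N)%N)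
    (C : comAlgType K) (x : A -> 'I_N -> 'I_N -> C) (HC : is_rep_algebra x)
    (M : lmodType C) (eps : E -> 'I_N -> 'I_N -> M) (HM : is_rep_module la ra x eps) :
  exists (dN : C -> M) (pair : M -> M -> C) (br : M -> M -> M),
    [/\ (forall a i j, dN (x a i j) = eps (d a) i j),
        (forall e f i j u v,
           pair (eps e i j) (eps f u v) = \sum_(p <- dp e f) x p.1 u j * x p.2 i v),
        (forall e f i j u v,
           br (eps e i j) (eps f u v) =
             \sum_(p <- dbl e f) x p.2 i v *: eps p.1 u j +
             \sum_(p <- dbr e f) x p.1 u j *: eps p.2 i v) &
        is_CD_algebra pair dN br].
Proof. exact: (main_thm HDCD HC HM). Qed.
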